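(* Fix $\beta\in(0,1/3)$. There exist $\epsilon_0>0$ and $q_0>0$ such that for every $q\in(0,q_0]$ there is $C_q>0$ such that for all $\epsilon\in(0,\epsilon_0]$: $$\sup_{K\in\mathbb{R}}\big|(1+K^2)^{1/4}\,l_\epsilon(K+iq)^{-1}\big|\le C_q,\qquad \sup_{K\in\mathbb{R}}\big|l_\epsilon(K+iq)^{-1}+\gamma_\beta^{-1}(1+(K+iq)^2)^{-1}\big|\le C_q\,\epsilon.$$
   Context: $m_\beta(k)=\sqrt{(1+\beta k^2)\tanh(k)/k}$, extended analytically to a neighborhood of the real axis in $\mathbb{C}$; $\gamma_\beta=(1-3\beta)/6$; $l_\epsilon(Z)=\epsilon^{-2}(m_\beta(\epsilon Z)-1-\gamma_\beta\epsilon^2)$ for complex $Z$ with $|\mathrm{Im}\,Z|$ small. *)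

(* Defs.v *)
From Stdlib Require Import Reals Lra.
Open Scope R_scope.

Record C := mkC { Re : R ; Im : R }.

Definition Cadd (z w : C) : C := mkC (Re z + Re w) (Im z + Im w).
Definition Csub (z w : C) : C := mkC (Re z - Re w) (Im z - Im w).
Definition Cmul (z w : C) : C :=
  mkC (Re z * Re w - Im z * Im w) (Re z * Im w + Im z * Re w).
Definition RtoC (x : R) : C := mkC x 0.
Definition Cnorm (z : C) : R := sqrt (Re z * Re z + Im z * Im z).
(* multiplicative inverse (total: Cinv 0 = 0, only used at nonzero points) *)
Definition Cinv (z : C) : C :=
  let d := Re z * Re z + Im z * Im z in mkC (Re z / d) (- Im z / d).
Definition Cdiv (z w : C) : C := Cmul z (Cinv w).
Definition Cexp (z : C) : C := mkC (exp (Re z) * cos (Im z)) (exp (Re z) * sin (Im z)).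
Definition Ctanh (z : C) : C :=
  let e := Cexp (Cmul (RtoC 2) z) in Cdiv (Csub e (RtoC 1)) (Cadd e (RtoC 1)).
(* principal square root (branch cut on the negative real axis) *)
Definition Csqrt (z : C) : C :=
  let r := Cnorm z in
  mkC (sqrt ((r + Re z) / 2))
      ((if Rlt_dec (Im z) 0 then -1 else 1) * sqrt ((r - Re z) / 2)).

(* m_beta(k) = sqrt((1 + beta k^2) tanh(k)/k), principal branch; near the real
   axis this is the analytic continuation of the positive real function. *)
Definition m_beta (beta : R) (k : C) : C :=
  Csqrt (Cdiv (Cmul (Cadd (RtoC 1) (Cmul (RtoC beta) (Cmul k k))) (Ctanh k)) k).

Definition gamma_beta (beta : R) : R := (1 - 3 * beta) / 6.

Definition l_eps (beta eps : R) (Z : C) : C :=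
  Cmul (RtoC (/ (eps * eps)))
    (Csub (m_beta beta (Cmul (RtoC eps) Z)) (RtoC (1 + gamma_beta beta * (eps * eps)))).

(* Main.v *)
Require Import Defs.
From Stdlib Require Import Reals.
From Stdlib Require Import Lra Psatz.
From Coquelicot Require Coquelicot.
Open Scope R_scope.

Lemma Cext z w : Re z = Re w -> Im z = Im w -> z = w.
Proof. destruct z, w; simpl; intros; subst; reflexivity. Qed.

Definition Copp (z : Defs.C) : Defs.C := mkC (- Re z) (- Im z).

Lemma Cring : ring_theory (RtoC 0) (RtoC 1) Cadd Cmul Csub Copp (@eq Defs.C).
Proof.
  constructor; intros; apply Cext; simpl; ring.
Qed.
Add Ring Cring : Cring.

Definition N2 (z : Defs.C) : R := Re z * Re z + Im z * Im z.

Lemma N2_ge0 z : 0 <= N2 z.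
Proof. unfold N2; nra. Qed.

Lemma Cnorm_ge0 z : 0 <= Cnorm z.
Proof. apply sqrt_pos. Qed.

Lemma Cnorm_sq z : Cnorm z * Cnorm z = N2 z.
Proof. unfold Cnorm. rewrite sqrt_sqrt; [reflexivity| apply N2_ge0]. Qed.

Lemma N2_mul z w : N2 (Cmul z w) = N2 z * N2 w.
Proof. unfold N2; simpl; ring. Qed.

Lemma Cnorm_mul z w : Cnorm (Cmul z w) = Cnorm z * Cnorm w.
Proof.
  unfold Cnorm. fold (N2 (Cmul z w)) (N2 z) (N2 w). rewrite N2_mul.
  apply sqrt_mult; apply N2_ge0.
Qed.

Lemma Cnorm_RtoC x : Cnorm (RtoC x) = Rabs x.
Proof. unfold Cnorm; simpl. replace (x*x+0*0) with (x*x) by ring. apply sqrt_Rsqr_abs. Qed.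

Lemma sq_le_norm (x y : R) : 0 <= y -> x * x <= y * y -> x <= y.
Proof. intros. nra. Qed.

Lemma Re_le z : Rabs (Re z) <= Cnorm z.
Proof.
  apply sq_le_norm. apply Cnorm_ge0. rewrite Cnorm_sq. unfold N2.
  rewrite <- Rabs_mult, Rabs_right by nra. nra.
Qed.

Lemma Im_le z : Rabs (Im z) <= Cnorm z.
Proof.
  apply sq_le_norm. apply Cnorm_ge0. rewrite Cnorm_sq. unfold N2.
  rewrite <- Rabs_mult, Rabs_right by nra. nra.
Qed.

Lemma Cnorm_le_sum z : Cnorm z <= Rabs (Re z) + Rabs (Im z).
Proof.
  apply sq_le_norm. pose proof (Rabs_pos (Re z)); pose proof (Rabs_pos (Im z)); lra.
  rewrite Cnorm_sq. unfold N2.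
  pose proof (Rabs_pos (Re z)); pose proof (Rabs_pos (Im z)).
  assert (Rabs (Re z) * Rabs (Re z) = Re z * Re z) by (rewrite <- Rabs_mult; apply Rabs_right; nra).
  assert (Rabs (Im z) * Rabs (Im z) = Im z * Im z) by (rewrite <- Rabs_mult; apply Rabs_right; nra).
  nra.
Qed.

Lemma Cnorm_triang z w : Cnorm (Cadd z w) <= Cnorm z + Cnorm w.
Proof.
  apply sq_le_norm. pose proof (Cnorm_ge0 z); pose proof (Cnorm_ge0 w); lra.
  assert (H: (Re z * Re w + Im z * Im w) <= Cnorm z * Cnorm w).
  { apply sq_le_norm. pose proof (Cnorm_ge0 z); pose proof (Cnorm_ge0 w); nra.
    replace (Cnorm z * Cnorm w * (Cnorm z * Cnorm w)) with ((Cnorm z * Cnorm z) * (Cnorm w * Cnorm w)) by ring.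
    rewrite !Cnorm_sq. unfold N2.
    pose proof (Rle_0_sqr (Re z * Im w - Im z * Re w)). unfold Rsqr in *. nra. }
  rewrite Cnorm_sq. unfold N2 in *; simpl.
  replace ((Cnorm z + Cnorm w) * (Cnorm z + Cnorm w)) with (Cnorm z * Cnorm z + Cnorm w * Cnorm w + 2 * (Cnorm z * Cnorm w)) by ring.
  rewrite !Cnorm_sq. unfold N2. nra.
Qed.

Lemma Cnorm_opp z : Cnorm (Copp z) = Cnorm z.
Proof. unfold Cnorm, Copp; simpl. f_equal; ring. Qed.

Lemma Csub_add z w : Csub z w = Cadd z (Copp w).
Proof. apply Cext; simpl; ring. Qed.

Lemma Cnorm_sub_le z w : Cnorm (Csub z w) <= Cnorm z + Cnorm w.
Proof. rewrite Csub_add. rewrite <- (Cnorm_opp w). apply Cnorm_triang. Qed.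

Lemma Cnorm_rev z w : Cnorm z - Cnorm w <= Cnorm (Cadd z w).
Proof.
  pose proof (Cnorm_sub_le (Cadd z w) w).
  replace (Csub (Cadd z w) w) with z in H by ring. lra.
Qed.

Lemma Cnorm_rev2 z w : Cnorm z - Cnorm w <= Cnorm (Csub z w).
Proof.
  rewrite Csub_add. pose proof (Cnorm_rev z (Copp w)). rewrite Cnorm_opp in H. lra.
Qed.

Lemma N2_eq0 z : N2 z = 0 -> z = RtoC 0.
Proof. unfold N2; intros; apply Cext; simpl; nra. Qed.

Lemma Cnorm_pos z : z <> RtoC 0 -> 0 < Cnorm z.
Proof.
  intros. unfold Cnorm. apply sqrt_lt_R0. fold (N2 z).
  destruct (N2_ge0 z); auto. exfalso; apply H, N2_eq0; auto.
Qed.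

Lemma N2_pos z : z <> RtoC 0 -> 0 < N2 z.
Proof. intros. destruct (N2_ge0 z); auto. exfalso; apply H, N2_eq0; auto. Qed.

Lemma Cinv_r z : z <> RtoC 0 -> Cmul z (Cinv z) = RtoC 1.
Proof.
  intros H. pose proof (N2_pos z H). unfold N2 in *.
  apply Cext; unfold Cinv; simpl; field; lra.
Qed.

Lemma Cnorm_inv z : z <> RtoC 0 -> Cnorm (Cinv z) = / Cnorm z.
Proof.
  intros H. pose proof (Cinv_r z H).
  assert (Cnorm z * Cnorm (Cinv z) = 1).
  { rewrite <- Cnorm_mul, H0, Cnorm_RtoC. apply Rabs_R1. }
  pose proof (Cnorm_pos z H). apply (Rmult_eq_reg_l (Cnorm z)); [|lra].
  rewrite H1. field. lra.
Qed.

Lemma Cnorm_eq0 z : Cnorm z = 0 -> z = RtoC 0.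
Proof. intros. destruct (Req_dec (N2 z) 0). apply N2_eq0; auto.
  exfalso. assert (z <> RtoC 0) by (intro; subst; apply H0; unfold N2; simpl; ring).
  pose proof (Cnorm_pos z H1). lra. Qed.

Lemma Csqrt_parts z : 0 <= (Cnorm z + Re z)/2 /\ 0 <= (Cnorm z - Re z)/2.
Proof. pose proof (Re_le z). revert H; unfold Rabs; destruct Rcase_abs; intros; split; lra. Qed.

Lemma Csqrt_sq z : Cmul (Csqrt z) (Csqrt z) = z.
Proof.
  destruct (Csqrt_parts z) as [H1 H2].
  assert (Hs : forall s : R, s * s = 1 -> Cmul (mkC (sqrt ((Cnorm z + Re z)/2)) (s * sqrt ((Cnorm z - Re z)/2)))
     (mkC (sqrt ((Cnorm z + Re z)/2)) (s * sqrt ((Cnorm z - Re z)/2))) =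
     mkC (Re z) (2 * s * (sqrt ((Cnorm z + Re z)/2) * sqrt ((Cnorm z - Re z)/2)))).
  { intros s Hs. apply Cext; simpl.
    replace (s * sqrt ((Cnorm z - Re z) / 2) * (s * sqrt ((Cnorm z - Re z) / 2))) with
      ((s*s) * (sqrt ((Cnorm z - Re z) / 2) * sqrt ((Cnorm z - Re z) / 2))) by ring.
    rewrite Hs, !sqrt_sqrt by lra. field. ring. }
  assert (E: (Cnorm z + Re z) / 2 * ((Cnorm z - Re z) / 2) = (Im z * Im z)/4).
  { replace ((Cnorm z + Re z) / 2 * ((Cnorm z - Re z) / 2)) with ((Cnorm z * Cnorm z - Re z * Re z)/4) by field.
    rewrite Cnorm_sq; unfold N2; field. }
  unfold Csqrt; cbv zeta. destruct (Rlt_dec (Im z) 0).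
  - rewrite Hs by ring. rewrite <- sqrt_mult by lra. rewrite E. apply Cext; simpl; auto.
    replace (Im z * Im z / 4) with (Rsqr (Im z / 2)) by (unfold Rsqr; field).
    rewrite sqrt_Rsqr_abs. rewrite Rabs_left by lra. field.
  - rewrite Hs by ring. rewrite <- sqrt_mult by lra. rewrite E. apply Cext; simpl; auto.
    replace (Im z * Im z / 4) with (Rsqr (Im z / 2)) by (unfold Rsqr; field).
    rewrite sqrt_Rsqr_abs. rewrite Rabs_right by lra. field.
Qed.

Lemma Csqrt_Re z : 0 <= Re (Csqrt z).
Proof. unfold Csqrt; simpl. apply sqrt_pos. Qed.

Lemma Csqrt_norm z : Cnorm (Csqrt z) = sqrt (Cnorm z).
Proof.
  destruct (Csqrt_parts z) as [H1 H2].
  unfold Csqrt at 1; cbv zeta. unfold Cnorm at 1. simpl. f_equal.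
  assert (Hs : forall s, s * s = 1 -> sqrt ((Cnorm z + Re z) / 2) * sqrt ((Cnorm z + Re z) / 2) +
     s * sqrt ((Cnorm z - Re z) / 2) * (s * sqrt ((Cnorm z - Re z) / 2)) = Cnorm z).
  { intros s Hs. replace (s * sqrt ((Cnorm z - Re z) / 2) * (s * sqrt ((Cnorm z - Re z) / 2))) with
      ((s*s) * (sqrt ((Cnorm z - Re z) / 2) * sqrt ((Cnorm z - Re z) / 2))) by ring.
    rewrite Hs, !sqrt_sqrt by lra. field. }
  destruct (Rlt_dec (Im z) 0); apply Hs; ring.
Qed.

Module CQ.
Import Coquelicot.Coquelicot.
Import Defs.

Lemma isd_minus (f g : R -> R) t df dg : is_derive f t df -> is_derive g t dg ->
  is_derive (fun x => f x - g x) t (df - dg).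
Proof. intros. apply (is_derive_minus f g t df dg); auto. Qed.

Lemma isd_plus (f g : R -> R) t df dg : is_derive f t df -> is_derive g t dg ->
  is_derive (fun x => f x + g x) t (df + dg).
Proof. intros. apply (is_derive_plus f g t df dg); auto. Qed.

Lemma mono0 (f f' : R -> R) x : 0 <= x ->
  (forall t, 0 <= t <= x -> is_derive f t (f' t)) ->
  (forall t, 0 <= t <= x -> 0 <= f' t) -> f 0 <= f x.
Proof.
  intros Hx Hd Hp. destruct Hx as [Hx|Hx]; [|subst; lra].
  destruct (MVT_cor2 f f' 0 x Hx) as [c [Hc1 Hc2]].
  - intros c Hc. apply is_derive_Reals. apply Hd; lra.
  - assert (0 <= f' c) by (apply Hp; lra). nra.
Qed.

Lemma comp0 (f f' g g' : R -> R) x : 0 <= x ->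
  (forall t, 0 <= t <= x -> is_derive f t (f' t)) ->
  (forall t, 0 <= t <= x -> is_derive g t (g' t)) ->
  (forall t, 0 <= t <= x -> Rabs (f' t) <= g' t) ->
  Rabs (f x - f 0) <= g x - g 0.
Proof.
  intros Hx Hf Hg Hb.
  assert (A: (g 0 - f 0) <= (g x - f x)).
  { apply (mono0 (fun t => g t - f t) (fun t => g' t - f' t)); auto.
    - intros; apply isd_minus; auto.
    - intros t Ht; pose proof (Hb t Ht). revert H; unfold Rabs; destruct Rcase_abs; lra. }
  assert (B: (g 0 + f 0) <= (g x + f x)).
  { apply (mono0 (fun t => g t + f t) (fun t => g' t + f' t)); auto.
    - intros; apply isd_plus; auto.
    - intros t Ht; pose proof (Hb t Ht). revert H; unfold Rabs; destruct Rcase_abs; lra. }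
  unfold Rabs; destruct Rcase_abs; lra.
Qed.

Lemma taylor4 (f0 f1 f2 f3 f4 : R -> R) M :
  (forall t, 0 <= t <= 1 -> is_derive f0 t (f1 t)) ->
  (forall t, 0 <= t <= 1 -> is_derive f1 t (f2 t)) ->
  (forall t, 0 <= t <= 1 -> is_derive f2 t (f3 t)) ->
  (forall t, 0 <= t <= 1 -> is_derive f3 t (f4 t)) ->
  (forall t, 0 <= t <= 1 -> Rabs (f4 t) <= M) ->
  Rabs (f0 1 - f0 0 - f1 0 - f2 0 / 2 - f3 0 / 6) <= M / 24.
Proof.
  intros H0 H1 H2 H3 HM.
  assert (S3: forall x, 0 <= x <= 1 -> Rabs (f3 x - f3 0) <= M * x).
  { intros x Hx. replace (M * x) with (M * x - M * 0) by field.
    apply (comp0 f3 f4 (fun t => M * t) (fun _ => M)); try lra.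
    - intros; apply H3; lra.
    - intros; auto_derive; auto; field.
    - intros; apply HM; lra. }
  assert (S2: forall x, 0 <= x <= 1 -> Rabs (f2 x - f2 0 - f3 0 * x) <= M * x^2/2).
  { intros x Hx.
    pose proof (comp0 (fun t => f2 t - f3 0 * t) (fun t => f3 t - f3 0) (fun t => M * t^2/2) (fun t => M * t) x) as C.
    replace (M * x^2/2) with (M * x^2/2 - M * 0^2/2) by field.
    replace (f2 x - f2 0 - f3 0 * x) with (f2 x - f3 0 * x - (f2 0 - f3 0 * 0)) by field.
    apply C; try lra.
    - intros. apply isd_minus. apply H2; lra. auto_derive; auto; field.
    - intros; auto_derive; auto; field.
    - intros; apply S3; lra. }
  assert (S1: forall x, 0 <= x <= 1 -> Rabs (f1 x - f1 0 - f2 0 * x - f3 0 * x^2/2) <= M * x^3/6).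
  { intros x Hx.
    pose proof (comp0 (fun t => f1 t - (f2 0 * t + f3 0 * t^2/2)) (fun t => f2 t - (f2 0 + f3 0 * t)) (fun t => M * t^3/6) (fun t => M * t^2/2) x) as C.
    replace (M * x^3/6) with (M * x^3/6 - M * 0^3/6) by field.
    replace (f1 x - f1 0 - f2 0 * x - f3 0 * x^2/2) with (f1 x - (f2 0 * x + f3 0 * x^2/2) - (f1 0 - (f2 0 * 0 + f3 0 * 0^2/2))) by field.
    apply C; try lra.
    - intros. apply isd_minus. apply H1; lra. auto_derive; auto; field.
    - intros; auto_derive; auto; field.
    - intros t Ht. replace (f2 t - (f2 0 + f3 0 * t)) with (f2 t - f2 0 - f3 0 * t) by field. apply S2; lra. }
  pose proof (comp0 (fun t => f0 t - (f1 0 * t + f2 0 * t^2/2 + f3 0 * t^3/6))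
     (fun t => f1 t - (f1 0 + f2 0 * t + f3 0 * t^2/2)) (fun t => M * t^4/24) (fun t => M * t^3/6) 1) as C.
  replace (M / 24) with (M * 1^4/24 - M * 0^4/24) by field.
  replace (f0 1 - f0 0 - f1 0 - f2 0 / 2 - f3 0 / 6) with
    (f0 1 - (f1 0 * 1 + f2 0 * 1^2/2 + f3 0 * 1^3/6) - (f0 0 - (f1 0 * 0 + f2 0 * 0^2/2 + f3 0 * 0^3/6))) by field.
  apply C; try lra.
  - intros. apply isd_minus. apply H0; lra. auto_derive; auto; field.
  - intros; auto_derive; auto; field.
  - intros t Ht. replace (f1 t - (f1 0 + f2 0 * t + f3 0 * t^2/2)) with (f1 t - f1 0 - f2 0 * t - f3 0 * t^2/2) by field. apply S1; lra.
Qed.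

Definition sh (y : R) := (exp y - exp (- y)) / 2.
Definition ch (y : R) := (exp y + exp (- y)) / 2.

Lemma ch_ge1 y : 1 <= ch y.
Proof.
  unfold ch. pose proof (exp_pos y); pose proof (exp_pos (-y)).
  assert (exp y * exp (-y) = 1) by (rewrite <- exp_plus; replace (y + - y) with 0 by ring; apply exp_0).
  assert (0 <= (exp y - exp (-y))^2) by apply pow2_ge_0.
  assert ((exp y + exp (-y))^2 >= 4) by nra. nra.
Qed.

Lemma mono0' (f f' : R -> R) x : 0 <= x -> f 0 = 0 ->
  (forall t, 0 <= t -> is_derive f t (f' t)) ->
  (forall t, 0 <= t -> 0 <= f' t) -> 0 <= f x.
Proof. intros. rewrite <- H0. apply (mono0 f f'); auto; intros; [apply H1|apply H2]; lra. Qed.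

Lemma sh_ge y : 0 <= y -> y <= sh y.
Proof.
  intros. cut (0 <= sh y - y). lra.
  apply (mono0' (fun t => sh t - t) (fun t => ch t - 1)); auto.
  - unfold sh. rewrite Ropp_0, exp_0. field.
  - intros. unfold sh, ch. auto_derive; auto. field.
  - intros. pose proof (ch_ge1 t); lra.
Qed.

Lemma psi_ge y : 0 <= y -> y^6/360 <= y^2 + y * sh y - 4 * ch y + 4.
Proof.
  intros Hy.
  assert (P3: forall t, 0 <= t -> 0 <= t * ch t - sh t - t^3/3).
  { intros t Ht. apply (mono0' (fun t => t * ch t - sh t - t^3/3) (fun t => t * sh t - t^2)); auto.
    - unfold sh, ch. rewrite Ropp_0, exp_0. field.
    - intros. unfold sh, ch. auto_derive; auto. field.
    - intros. pose proof (sh_ge t0 H). nra. }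
  assert (P2: forall t, 0 <= t -> 0 <= 2 + t * sh t - 2 * ch t - t^4/12).
  { intros t Ht. apply (mono0' (fun t => 2 + t * sh t - 2 * ch t - t^4/12) (fun t => t * ch t - sh t - t^3/3)); auto.
    - unfold sh, ch. rewrite Ropp_0, exp_0. field.
    - intros. unfold sh, ch. auto_derive; auto. field. }
  assert (P1: forall t, 0 <= t -> 0 <= 2 * t + t * ch t - 3 * sh t - t^5/60).
  { intros t Ht. apply (mono0' (fun t => 2 * t + t * ch t - 3 * sh t - t^5/60) (fun t => 2 + t * sh t - 2 * ch t - t^4/12)); auto.
    - unfold sh, ch. rewrite Ropp_0, exp_0. field.
    - intros. unfold sh, ch. auto_derive; auto. field. }
  cut (0 <= y^2 + y * sh y - 4 * ch y + 4 - y^6/360). lra.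
  apply (mono0' (fun t => t^2 + t * sh t - 4 * ch t + 4 - t^6/360) (fun t => 2 * t + t * ch t - 3 * sh t - t^5/60)); auto.
  - unfold sh, ch. rewrite Ropp_0, exp_0. field.
  - intros. unfold sh, ch. auto_derive; auto. field.
Qed.

Lemma psi_u a : 0 <= a ->
  exp (2*a) * (2*a)^6/360 <= - 2 * (exp (2*a) - 1)^2 + a * (4 * a * exp (2*a) + exp (2*a)^2 - 1).
Proof.
  intros Ha. pose proof (psi_ge (2*a)). unfold sh, ch in H.
  set (u := exp (2*a)) in *.
  assert (Hu: exp (- (2*a)) = / u) by (apply exp_Ropp).
  rewrite Hu in H. assert (0 < u) by apply exp_pos.
  assert (H1 := H ltac:(lra)).
  apply (Rmult_le_compat_l u) in H1; [|lra].
  replace (u * ((2 * a) ^ 2 + 2 * a * ((u - / u) / 2) - 4 * ((u + / u) / 2) + 4)) with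
    (- 2 * (u - 1)^2 + a * (4 * a * u + u^2 - 1)) in H1 by (field; lra).
  lra.
Qed.

Lemma sin_le_id x : 0 <= x -> sin x <= x.
Proof.
  intros. cut (0 <= x - sin x). lra.
  apply (mono0' (fun t => t - sin t) (fun t => 1 - cos t)); auto.
  - rewrite sin_0; ring.
  - intros; auto_derive; auto; ring.
  - intros; pose proof (COS_bound t); lra.
Qed.

Lemma cos_lb2 x : 0 <= x -> 1 - x^2/2 <= cos x.
Proof.
  intros. cut (0 <= cos x - 1 + x^2/2). lra.
  apply (mono0' (fun t => cos t - 1 + t^2/2) (fun t => t - sin t)); auto.
  - rewrite cos_0; field.
  - intros; auto_derive; auto; field.
  - intros; pose proof (sin_le_id t H0); lra.
Qed.

Lemma sin_lb3 x : 0 <= x -> x - x^3/6 <= sin x.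
Proof.
  intros. cut (0 <= sin x - x + x^3/6). lra.
  apply (mono0' (fun t => sin t - t + t^3/6) (fun t => cos t - 1 + t^2/2)); auto.
  - rewrite sin_0; field.
  - intros; auto_derive; auto; field.
  - intros; pose proof (cos_lb2 t H0); lra.
Qed.

Definition gfun x y A B t := exp (t * x) * (A * cos (t * y) - B * sin (t * y)).

Lemma gfun_deriv x y A B t : is_derive (gfun x y A B) t (gfun x y (A*x - B*y) (A*y + B*x) t).
Proof. unfold gfun. auto_derive; auto. ring. Qed.

Lemma gfun_bound x y A B t : 0 <= t <= 1 -> x <= 1 ->
  Rabs (gfun x y A B t) <= 3 * sqrt (A*A + B*B).
Proof.
  intros Ht Hx. unfold gfun. rewrite Rabs_mult.
  assert (E: exp (t * x) <= 3).
  { assert (t * x <= 1) by (destruct (Rle_dec 0 x); [assert (0 <= (1-t)*x) by (apply Rmult_le_pos; lra); lra | assert (0 <= t * (-x)) by (apply Rmult_le_pos; lra); lra]).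
    apply Rle_trans with (exp 1). destruct (Req_dec (t*x) 1). rewrite H0; lra.
    left; apply exp_increasing. lra. apply exp_le_3. }
  rewrite Rabs_right by (left; apply exp_pos).
  apply Rmult_le_compat; try lra. left; apply exp_pos. apply Rabs_pos.
  apply sq_le_norm. apply sqrt_pos. rewrite sqrt_sqrt by nra.
  rewrite <- Rabs_mult, Rabs_right by (apply Rle_ge; apply Rle_0_sqr).
  pose proof (sin2_cos2 (t*y)). unfold Rsqr in H.
  pose proof (Rle_0_sqr (A * sin (t*y) + B * cos (t*y))). unfold Rsqr in H0. nra.
Qed.

Definition T3 (w : Defs.C) : Defs.C :=
  Cadd (Cadd (Cadd (RtoC 1) w) (Cmul (RtoC (1/2)) (Cmul w w))) (Cmul (RtoC (1/6)) (Cmul (Cmul w w) w)).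

Lemma exp_taylor_c (c w : Defs.C) : Re w <= 1 ->
  Rabs (Re (Cmul c (Csub (Cexp w) (T3 w)))) <= Cnorm c * (Cnorm w)^4 / 8.
Proof.
  intros Hx. set (x := Re w). set (y := Im w).
  set (c1 := Cmul c w). set (c2 := Cmul c1 w). set (c3 := Cmul c2 w). set (c4 := Cmul c3 w).
  pose proof (taylor4 (gfun x y (Re c) (Im c)) (gfun x y (Re c1) (Im c1)) (gfun x y (Re c2) (Im c2))
     (gfun x y (Re c3) (Im c3)) (gfun x y (Re c4) (Im c4)) (3 * Cnorm c4)) as T.
  assert (D: forall d, Re (Cmul d w) = Re d * x - Im d * y /\ Im (Cmul d w) = Re d * y + Im d * x).
  { intros; simpl; unfold x, y; split; ring. }
  assert (Dd: forall d t, is_derive (gfun x y (Re d) (Im d)) t (gfun x y (Re (Cmul d w)) (Im (Cmul d w)) t)).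
  { intros. destruct (D d) as [-> ->]. apply gfun_deriv. }
  assert (G0: forall d, gfun x y (Re d) (Im d) 0 = Re d).
  { intros. unfold gfun. rewrite !Rmult_0_l, exp_0, cos_0, sin_0. ring. }
  rewrite !G0 in T.
  assert (G1: gfun x y (Re c) (Im c) 1 = Re (Cmul c (Cexp w))).
  { unfold gfun, Cexp; simpl. fold x y. rewrite !Rmult_1_l. ring. }
  rewrite G1 in T.
  assert (HR: Re (Cmul c (Csub (Cexp w) (T3 w))) = Re (Cmul c (Cexp w)) - Re c - Re c1 - Re c2 / 2 - Re c3 / 6).
  { unfold c3, c2, c1, T3. simpl. field. }
  rewrite HR.
  assert (HN: Cnorm c4 = Cnorm c * Cnorm w ^ 4).
  { unfold c4, c3, c2, c1. rewrite !Cnorm_mul. ring. }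
  replace (Cnorm c * Cnorm w ^ 4 / 8) with (3 * Cnorm c4 / 24) by (rewrite HN; field).
  apply T; intros; try apply Dd.
  unfold Cnorm. apply gfun_bound; auto.
Qed.

Lemma exp_taylor (w : Defs.C) : Re w <= 1 ->
  Cnorm (Csub (Cexp w) (T3 w)) <= (Cnorm w)^4 / 4.
Proof.
  intros Hx. eapply Rle_trans. apply Cnorm_le_sum.
  pose proof (exp_taylor_c (RtoC 1) w Hx) as A.
  pose proof (exp_taylor_c (mkC 0 (-1)) w Hx) as B.
  rewrite Cnorm_RtoC, Rabs_R1 in A.
  replace (Cnorm (mkC 0 (-1))) with 1 in B.
  2:{ unfold Cnorm; simpl. replace (0*0 + -1 * -1) with 1 by ring. symmetry; apply sqrt_1. }
  replace (Re (Cmul (RtoC 1) (Csub (Cexp w) (T3 w)))) with (Re (Csub (Cexp w) (T3 w))) in A by (simpl; ring).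
  replace (Re (Cmul (mkC 0 (-1)) (Csub (Cexp w) (T3 w)))) with (Im (Csub (Cexp w) (T3 w))) in B by (simpl; ring).
  lra.
Qed.

End CQ.
Import CQ.

Definition Fk (beta : R) (k : Defs.C) : Defs.C :=
  Cdiv (Cmul (Cadd (RtoC 1) (Cmul (RtoC beta) (Cmul k k))) (Ctanh k)) k.

Lemma m_beta_Fk beta k : m_beta beta k = Csqrt (Fk beta k).
Proof. reflexivity. Qed.

Lemma CnRm c z : Cnorm (Cmul (RtoC c) z) = Rabs c * Cnorm z.
Proof. rewrite Cnorm_mul, Cnorm_RtoC; reflexivity. Qed.

Ltac cn := repeat rewrite ?Cnorm_mul, ?Cnorm_RtoC.

Lemma tr3 a b c : Cnorm (Cadd (Cadd a b) c) <= Cnorm a + Cnorm b + Cnorm c.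
Proof. eapply Rle_trans; [apply Cnorm_triang|]. pose proof (Cnorm_triang a b). lra. Qed.

Lemma tr4 a b c d : Cnorm (Cadd (Cadd (Cadd a b) c) d) <= Cnorm a + Cnorm b + Cnorm c + Cnorm d.
Proof. eapply Rle_trans; [apply Cnorm_triang|]. pose proof (tr3 a b c). lra. Qed.

Lemma tanh_taylor k : Cnorm k <= 1/4 ->
  Cnorm (Csub (Ctanh k) (Csub k (Cmul (RtoC (1/3)) (Cmul (Cmul k k) k)))) <= 6 * (Cnorm k)^4.
Proof.
  intros Hk. set (rho := Cnorm k) in *. assert (Hr0 : 0 <= rho) by apply Cnorm_ge0.
  set (w := Cmul (RtoC 2) k).
  assert (Hw : Cnorm w = 2 * rho) by (unfold w; rewrite CnRm, Rabs_right by lra; reflexivity).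
  set (e := Cexp w). set (R0 := Csub e (T3 w)).
  assert (HR : Cnorm R0 <= 4 * (rho*rho*rho*rho)).
  { unfold R0, e. eapply Rle_trans. apply exp_taylor.
    pose proof (Re_le w). rewrite Hw in H. pose proof (Rle_abs (Re w)). lra.
    rewrite Hw. right; simpl; field. }
  assert (He : e = Cadd (T3 w) R0) by (unfold R0; ring).
  set (X := Cadd (Cadd (Cadd (Cmul (RtoC 2) k) (Cmul (RtoC 2) (Cmul k k))) (Cmul (RtoC (4/3)) (Cmul (Cmul k k) k))) R0).
  assert (HX : Cadd e (RtoC 1) = Cadd (RtoC 2) X).
  { rewrite He. unfold X, T3, w. apply Cext; simpl; field. }
  assert (HXn : Cnorm X <= 2 * rho + 2 * (rho*rho) + 4/3 * (rho*rho*rho) + 4 * (rho*rho*rho*rho)).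
  { unfold X. eapply Rle_trans. apply tr4. cn. rewrite !Rabs_right by lra.
    fold rho. lra. }
  assert (Hd : 1 <= Cnorm (Cadd e (RtoC 1))).
  { rewrite HX. pose proof (Cnorm_rev (RtoC 2) X). rewrite Cnorm_RtoC, Rabs_right in H by lra.
    assert (rho*rho <= rho/4) by nra. assert (rho*rho*rho <= rho*rho/4) by nra.
    assert (rho*rho*rho*rho <= rho*rho*rho/4) by nra. lra. }
  assert (Hnz : Cadd e (RtoC 1) <> RtoC 0).
  { intro Hc. rewrite Hc, Cnorm_RtoC, Rabs_R0 in Hd. lra. }
  set (I := Cinv (Cadd e (RtoC 1))).
  assert (HI : Cmul (Cadd e (RtoC 1)) I = RtoC 1) by (apply Cinv_r; auto).
  assert (HIn : Cnorm I <= 1).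
  { unfold I. rewrite Cnorm_inv by auto.
    assert (/ Cnorm (Cadd e (RtoC 1)) <= / 1) by (apply Rinv_le_contravar; lra). rewrite Rinv_1 in H. exact H. }
  set (p := Csub k (Cmul (RtoC (1 / 3)) (Cmul (Cmul k k) k))).
  set (N := Cadd (Cadd (Cadd (Cmul R0 (Cadd (Csub (RtoC 1) k) (Cmul (RtoC (1/3)) (Cmul (Cmul k k) k))))
        (Cmul (RtoC (-2/3)) (Cmul (Cmul (Cmul k k) k) k)))
        (Cmul (RtoC (2/3)) (Cmul (Cmul (Cmul (Cmul k k) k) k) k)))
        (Cmul (RtoC (4/9)) (Cmul (Cmul (Cmul (Cmul (Cmul k k) k) k) k) k))).
  assert (HN : Csub (Csub e (RtoC 1)) (Cmul p (Cadd e (RtoC 1))) = N).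
  { rewrite He. unfold N, p, T3, w. apply Cext; simpl; field. }
  assert (HT : Ctanh k = Cmul (Csub e (RtoC 1)) I) by reflexivity.
  assert (HTp : Csub (Ctanh k) p = Cmul N I).
  { rewrite HT, <- HN. transitivity (Csub (Cmul (Csub e (RtoC 1)) I) (Cmul p (Cmul (Cadd e (RtoC 1)) I))).
    rewrite HI; ring. ring. }
  fold p. rewrite HTp, Cnorm_mul.
  assert (HNn : Cnorm N <= 6 * (rho*rho*rho*rho)).
  { unfold N. eapply Rle_trans. apply tr4. cn.
    assert (Cnorm (Cadd (Csub (RtoC 1) k) (Cmul (RtoC (1 / 3)) (Cmul (Cmul k k) k))) <= 1 + rho + rho*rho*rho/3).
    { eapply Rle_trans. apply Cnorm_triang. pose proof (Cnorm_sub_le (RtoC 1) k). cn.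
      rewrite Cnorm_RtoC, Rabs_R1 in H. rewrite Rabs_right by lra. fold rho in H |- *. lra. }
    replace (Rabs (-2/3)) with (2/3) by (rewrite Rabs_left by lra; field).
    rewrite !Rabs_right by lra. fold rho.
    pose proof (Cnorm_ge0 R0). 
    assert (Cnorm R0 * Cnorm (Cadd (Csub (RtoC 1) k) (Cmul (RtoC (1 / 3)) (Cmul (Cmul k k) k))) <=
        4 * (rho*rho*rho*rho) * (1 + rho + rho*rho*rho/3)).
    { apply Rmult_le_compat; auto. apply Cnorm_ge0. }
    assert (rho*rho <= rho/4) by nra. assert (rho*rho*rho <= rho*rho/4) by nra.
    assert (rho*rho*rho*rho <= rho*rho*rho/4) by nra.
    assert (rho*rho*rho*rho*rho <= rho*rho*rho*rho/4) by nra.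
    assert (rho*rho*rho*rho*rho*rho <= rho*rho*rho*rho*rho/4) by nra.
    nra. }
  assert (0 <= Cnorm N) by apply Cnorm_ge0.
  assert (Cnorm N * Cnorm I <= 6 * (rho*rho*rho*rho) * 1) by (apply Rmult_le_compat; auto; apply Cnorm_ge0).
  simpl. lra.
Qed.

Lemma F_taylor beta k : 0 < beta < 1/3 -> k <> RtoC 0 -> Cnorm k <= 1/4 ->
  Cnorm (Cadd (Csub (Fk beta k) (RtoC 1)) (Cmul (RtoC (2 * gamma_beta beta)) (Cmul k k)))
   <= 7 * (Cnorm k * Cnorm k * Cnorm k).
Proof.
  intros Hb Hk0 Hk. pose proof (tanh_taylor k Hk) as HT.
  set (rho := Cnorm k) in *. assert (Hr : 0 < rho) by (apply Cnorm_pos; auto).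
  set (P := Cadd (RtoC 1) (Cmul (RtoC beta) (Cmul k k))).
  set (p := Csub k (Cmul (RtoC (1 / 3)) (Cmul (Cmul k k) k))) in *.
  set (T := Ctanh k) in *.
  set (ki := Cinv k).
  assert (Hki : Cmul k ki = RtoC 1) by (apply Cinv_r; auto).
  set (Q := Cadd (RtoC 1) (Cmul (RtoC (beta - 1/3)) (Cmul k k))).
  assert (E : Cadd (Csub (Fk beta k) (RtoC 1)) (Cmul (RtoC (2 * gamma_beta beta)) (Cmul k k)) =
     Cadd (Cmul (Csub (Cmul P (Csub T p)) (Cmul (RtoC (beta/3)) (Cmul (Cmul (Cmul (Cmul k k) k) k) k))) ki)
          (Cmul (Csub (Cmul k ki) (RtoC 1)) Q)).
  { assert (HF : Fk beta k = Cmul (Cmul P T) ki) by reflexivity. rewrite HF.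
    clearbody T ki. unfold P, p, Q, gamma_beta. apply Cext; simpl; field. }
  rewrite E, Hki. replace (Cmul (Csub (RtoC 1) (RtoC 1)) Q) with (RtoC 0) by (apply Cext; simpl; ring).
  replace (Cadd (Cmul (Csub (Cmul P (Csub T p)) (Cmul (RtoC (beta / 3)) (Cmul (Cmul (Cmul (Cmul k k) k) k) k))) ki) (RtoC 0))
   with (Cmul (Csub (Cmul P (Csub T p)) (Cmul (RtoC (beta / 3)) (Cmul (Cmul (Cmul (Cmul k k) k) k) k))) ki) by ring.
  rewrite Cnorm_mul. unfold ki. rewrite Cnorm_inv by auto. fold rho.
  assert (HP : Cnorm P <= 1 + rho * rho / 3).
  { unfold P. eapply Rle_trans. apply Cnorm_triang. cn. rewrite Rabs_R1, Rabs_right by lra. fold rho. nra. }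
  assert (H1 : Cnorm (Csub (Cmul P (Csub T p)) (Cmul (RtoC (beta / 3)) (Cmul (Cmul (Cmul (Cmul k k) k) k) k)))
     <= (1 + rho*rho/3) * (6 * (rho*rho*rho*rho)) + rho*rho*rho*rho*rho/9).
  { eapply Rle_trans. apply Cnorm_sub_le. cn. rewrite Rabs_right by lra. fold rho.
    assert (Cnorm P * Cnorm (Csub T p) <= (1 + rho*rho/3) * (6 * (rho*rho*rho*rho))).
    { apply Rmult_le_compat; try apply Cnorm_ge0; auto. simpl in HT. lra. }
    assert (0 <= rho*rho*rho*rho*rho) by (repeat apply Rmult_le_pos; lra).
    assert (beta/3 * (rho*rho*rho*rho*rho) <= rho*rho*rho*rho*rho/9) by nra. lra. }
  apply (Rmult_le_compat_r (/ rho)) in H1; [|left; apply Rinv_0_lt_compat; lra].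
  eapply Rle_trans; [exact H1|].
  replace (((1 + rho * rho / 3) * (6 * (rho * rho * rho * rho)) + rho * rho * rho * rho * rho / 9) * / rho)
    with ((1 + rho * rho / 3) * 6 * (rho * rho * rho) + rho * rho * rho * rho / 9) by (field; lra).
  assert (rho * rho <= 1/16) by nra. assert (0 <= rho*rho*rho) by (repeat apply Rmult_le_pos; lra).
  nra.
Qed.

Definition uu a := exp (2 * a).
Definition WW a b := uu a * uu a + 2 * uu a * cos (2 * b) + 1.
Definition rr a b := a * a + b * b.
Definition NX beta a b := a * (1 + beta * rr a b) * (uu a * uu a - 1) - 2 * b * (beta * rr a b - 1) * uu a * sin (2 * b).
Definition NY beta a b := 2 * a * (1 + beta * rr a b) * uu a * sin (2 * b) + b * (beta * rr a b - 1) * (uu a * uu a - 1).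

Lemma Ctanh_explicit a b : WW a b <> 0 ->
  Ctanh (mkC a b) = mkC ((uu a * uu a - 1) / WW a b) (2 * uu a * sin (2 * b) / WW a b).
Proof.
  intros HW.
  assert (Hd : (uu a * cos (2 * b) + 1) * (uu a * cos (2 * b) + 1) +
     uu a * sin (2 * b) * (uu a * sin (2 * b)) = WW a b).
  { unfold WW. pose proof (sin2_cos2 (2*b)). unfold Rsqr in H. nra. }
  unfold Ctanh, Cdiv, Cinv, Cexp. apply Cext; simpl;
  replace (2 * a - 0 * b) with (2 * a) by ring; replace (2 * b + 0 * a) with (2 * b) by ring;
  rewrite ?Rplus_0_r, ?Rminus_0_r; fold (uu a); rewrite Hd.
  - transitivity (((uu a * cos (2 * b))^2 + (uu a * sin (2 * b))^2 - 1) / WW a b). field; auto.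
    f_equal. replace ((uu a * cos (2 * b))^2 + (uu a * sin (2 * b))^2) with (uu a * uu a * (Rsqr (sin (2*b)) + Rsqr (cos (2*b)))) by (unfold Rsqr; ring).
    rewrite sin2_cos2. ring.
  - field; auto.
Qed.

Lemma Fk_explicit beta a b : 0 < b -> WW a b <> 0 ->
  Fk beta (mkC a b) = mkC (NX beta a b / (WW a b * rr a b)) (NY beta a b / (WW a b * rr a b)).
Proof.
  intros Hb HW. assert (Hr : rr a b <> 0) by (unfold rr; nra).
  unfold Fk, Cdiv. rewrite Ctanh_explicit by auto.
  unfold Cinv, NX, NY. unfold rr in *. apply Cext; simpl; field; auto.
Qed.

Definition Cerr A U := 32*A*U*U + (8/3)*A*A*A*U*(U+1)*(U+1) + 4*A*A*U*(4*A*U+U*U).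

Lemma LR_mid (a b u S Co c2 A U a0 : R) :
  0 < a0 -> a0 <= a <= A -> 0 < b <= 1/4 -> 1 <= u <= U ->
  u * (2*a)^6/360 <= -2*(u-1)^2 + a*(4*a*u + u*u - 1) ->
  2*b - 4/3*(b*b*b) <= S <= 2*b -> 1 - 2*(b*b) <= Co <= 1 -> 1 <= c2 ->
  b * b * Cerr A U <= a0 * (2*a0)^6/180 ->
  let W := u*u + 2*u*Co + 1 in let r := a*a + b*b in
  let Dm := a*(u*u-1) - 2*b*u*S in let Nm := 2*a*u*S + b*(u*u-1) in
  b * (a0 * (2*a0)^6/180) <= -2*a*b*(u*u-1)^2 - 8*a*b*u*u*(S*S) + c2 * Nm * W * r.
Proof.
  intros Ha0 Ha Hb Hu Hpsi HS HCo Hc2 Hb0 W r Dm Nm.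
  assert (Hbb : b*b <= 1/16) by (assert (b*b <= b*(1/4)) by (apply Rmult_le_compat_l; lra); lra).
  assert (Hbbb : b*b*b <= b/16) by (assert (b*b*b <= (1/16)*b) by (apply Rmult_le_compat_r; lra); lra).
  destruct HS as [HS1 HS2]. assert (S0 : 0 <= S) by lra.
  set (L1 := 4*a*u + u*u - 1 - (8/3)*a*u*(b*b)).
  set (L2 := (u+1)*(u+1) - 4*u*(b*b)).
  assert (Hau : 0 <= a*u) by nra. assert (Huu : 1 <= u*u) by nra.
  assert (Haub : a*u*(b*b) <= a*u/16) by (assert (a*u*(b*b) <= a*u*(1/16)) by (apply Rmult_le_compat_l; lra); lra).
  assert (Hub : u*(b*b) <= u/16) by (assert (u*(b*b) <= u*(1/16)) by (apply Rmult_le_compat_l; lra); lra).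
  assert (HL1 : 0 <= L1) by (unfold L1; lra).
  assert (HL2 : 0 <= L2) by (unfold L2; nra).
  assert (HNm : b * L1 <= Nm).
  { unfold Nm, L1. assert (2*a*u*S >= 2*a*u*(2*b - 4/3*(b*b*b))) by (apply Rle_ge, Rmult_le_compat_l; nra). nra. }
  assert (HW : L2 <= W) by (unfold W, L2; nra).
  assert (Hr : a*a <= r) by (unfold r; nra).
  assert (HP : b * L1 * L2 * (a*a) <= Nm * W * r).
  { assert (0 <= b*L1) by (apply Rmult_le_pos; lra).
    assert (b*L1*L2 <= Nm*W) by (apply Rmult_le_compat; lra).
    apply Rmult_le_compat; try lra. apply Rmult_le_pos; lra. nra. }
  assert (HP2 : Nm * W * r <= c2 * (Nm * W * r)).
  { assert (0 <= Nm * W * r) by (assert (0 <= b*L1*L2*(a*a)) by (repeat apply Rmult_le_pos; nra); lra). nra. }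
  assert (HSS : S*S <= 4*(b*b)) by nra.
  assert (H8 : 8*a*b*u*u*(S*S) <= 8*a*b*u*u*(4*(b*b))).
  { apply Rmult_le_compat_l; [|lra]. assert (0 <= a*b*u*u) by (repeat apply Rmult_le_pos; nra). nra. }
  set (M0 := -2*a*(u*u-1)^2 + a*a*(4*a*u+u*u-1)*((u+1)*(u+1))).
  assert (HM0 : M0 = a*((u+1)*(u+1))*(-2*(u-1)^2 + a*(4*a*u + u*u - 1))) by (unfold M0; ring).
  assert (HMl : 2 * (a0 * (2*a0)^6/180) <= M0).
  { rewrite HM0. assert (u*(2*a)^6/360 >= 1*(2*a0)^6/360).
    { apply Rle_ge. apply Rmult_le_compat_r. lra. apply Rmult_le_compat; try lra.
      apply pow_le; lra. apply pow_incr; lra. }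
    assert (a*((u+1)*(u+1)) >= a0*4) by (apply Rle_ge; apply Rmult_le_compat; nra).
    assert (0 <= (2*a0)^6) by (apply pow_le; lra).
    apply Rle_trans with ((a0*4) * ((2*a0)^6/360)). lra.
    apply Rmult_le_compat; try lra. }
  assert (HE : L1 * L2 * (a*a) >= M0/a*0 + (a*a*(4*a*u+u*u-1)*((u+1)*(u+1))) - a*a*((8/3)*a*u*(b*b)*((u+1)*(u+1)) + 4*u*(b*b)*(4*a*u+u*u-1))).
  { unfold L1, L2. rewrite Rmult_0_r.
    assert (0 <= a*a*((8/3)*a*u*(b*b))*(4*u*(b*b))) by (repeat apply Rmult_le_pos; nra). nra. }
  assert (HEr : a*a*((8/3)*a*u*(b*b)*((u+1)*(u+1)) + 4*u*(b*b)*(4*a*u+u*u-1)) + 32*a*u*u*(b*b) <= b*b*Cerr A U).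
  { unfold Cerr.
    assert (0 <= a) by lra. assert (0 <= b*b) by nra.
    assert (a*a <= A*A) by (apply Rmult_le_compat; lra).
    assert (a*a*a <= A*A*A) by (apply Rmult_le_compat; try lra; apply Rmult_le_pos; lra).
    assert (u*u <= U*U) by (apply Rmult_le_compat; lra).
    assert (u*(u+1) <= U*(U+1)) by (apply Rmult_le_compat; lra).
    assert (u*(u+1)*(u+1) <= U*(U+1)*(U+1)) by (apply Rmult_le_compat; try lra; apply Rmult_le_pos; lra).
    assert (a*(u*u) <= A*(U*U)) by (apply Rmult_le_compat; try lra; apply Rmult_le_pos; lra).
    assert (a*a*a*(u*(u+1)*(u+1)) <= A*A*A*(U*(U+1)*(U+1))).
    { apply Rmult_le_compat; try lra. repeat apply Rmult_le_pos; lra. repeat apply Rmult_le_pos; lra. }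
    assert (a*u <= A*U) by (apply Rmult_le_compat; lra).
    assert (4*a*u+u*u <= 4*A*U+U*U) by lra.
    assert (a*a*u <= A*A*U) by (apply Rmult_le_compat; try lra; apply Rmult_le_pos; lra).
    assert (a*a*u*(4*a*u+u*u) <= A*A*U*(4*A*U+U*U)).
    { apply Rmult_le_compat; try lra. repeat apply Rmult_le_pos; lra. }
    assert (0 <= a*a*u) by (repeat apply Rmult_le_pos; lra).
    assert (a*a*u*(4*a*u+u*u-1) <= a*a*u*(4*a*u+u*u)) by (apply Rmult_le_compat_l; lra).
    replace (a*a*((8/3)*a*u*(b*b)*((u+1)*(u+1)) + 4*u*(b*b)*(4*a*u+u*u-1)) + 32*a*u*u*(b*b))
      with (b*b*((8/3)*(a*a*a*(u*(u+1)*(u+1))) + 4*(a*a*u*(4*a*u+u*u-1)) + 32*(a*(u*u)))) by ring.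
    replace (32 * A * U * U + 8 / 3 * A * A * A * U * (U + 1) * (U + 1) + 4 * A * A * U * (4 * A * U + U * U))
      with ((8/3)*(A*A*A*(U*(U+1)*(U+1))) + 4*(A*A*U*(4*A*U+U*U)) + 32*(A*(U*U))) by ring.
    apply Rmult_le_compat_l; lra. }
  assert (Hfin : b * (a0 * (2*a0)^6/180) <= b * (M0 - b*b*Cerr A U)) by (apply Rmult_le_compat_l; lra).
  set (err1 := a*a*((8/3)*a*u*(b*b)*((u+1)*(u+1)) + 4*u*(b*b)*(4*a*u+u*u-1))) in *.
  set (main := a*a*(4*a*u+u*u-1)*((u+1)*(u+1))) in *.
  assert (Hbi : b * (main - err1) <= b * (L1 * L2 * (a*a))).
  { apply Rmult_le_compat_l; [lra|]. rewrite Rmult_0_r in HE. lra. }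
  assert (Heq : b*(M0 - (err1 + 32*a*u*u*(b*b))) = -2*a*b*(u*u-1)^2 + b*(main - err1) - 8*a*b*u*u*(4*(b*b))).
  { unfold M0, main. ring. }
  assert (b * (M0 - b*b*Cerr A U) <= b*(M0 - (err1 + 32*a*u*u*(b*b)))) by (apply Rmult_le_compat_l; lra).
  lra.
Qed.

Lemma LR_large (beta a b u S Co c2 : R) :
  0 < beta < 1/3 -> 16/beta <= a -> 0 < b <= 1/4 -> 1 + 2*a <= u ->
  0 <= S <= 2*b -> 0 <= Co <= 1 -> c2 <= 2 ->
  let W := u*u + 2*u*Co + 1 in let r := a*a + b*b in
  beta*a/4 <= (a*(1+beta*r)*(u*u-1) - 2*b*(beta*r-1)*u*S) / (W*r) - c2.
Proof.
  intros Hb Ha Hbb Hu HS HCo Hc2 W r.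
  assert (Hba : 16 <= beta * a).
  { apply (Rmult_le_compat_l beta) in Ha; [|lra]. replace (beta * (16/beta)) with 16 in Ha by (field; lra). lra. }
  assert (Ha0 : 0 < a) by nra.
  assert (Hu3 : 3 <= u) by nra.
  assert (Hr : 0 < r) by (unfold r; nra).
  assert (HW0 : 0 < W) by (unfold W; nra).
  assert (HW : W <= (u+1)*(u+1)) by (unfold W; nra).
  assert (Key : (2 + beta*a/4)*(u+1)*(u+1) + beta*u/4 <= a*beta*(u*u-1)).
  { assert (E1 : a*beta*(u*u-1) - beta*a/4*((u+1)*(u+1)) = beta*a*(u+1)*(3*u-5)/4) by field.
    assert (beta*a*(u+1)*(3*u-5) >= beta*a*(u+1)*(u+1)).
    { apply Rle_ge, Rmult_le_compat_l; [|lra]. apply Rmult_le_pos; lra. }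
    assert (beta*a*((u+1)*(u+1)) >= 16*((u+1)*(u+1))) by (apply Rle_ge, Rmult_le_compat_r; nra).
    assert (beta*u/4 <= 2*((u+1)*(u+1))) by nra.
    nra. }
  assert (HN : (2 + beta*a/4)*W*r <= a*(1+beta*r)*(u*u-1) - 2*b*(beta*r-1)*u*S).
  { assert (T1 : - (beta * r * u / 4) <= - 2*b*(beta*r-1)*u*S).
    { assert (0 <= 2*b*u*S) by (repeat apply Rmult_le_pos; lra).
      assert (2*b*beta*r*u*S <= 2*b*beta*r*u*(2*b)) by (apply Rmult_le_compat_l; [repeat apply Rmult_le_pos; lra| lra]).
      assert (b*b <= 1/16) by nra.
      assert (4*beta*r*u*(b*b) <= 4*beta*r*u*(1/16)) by (apply Rmult_le_compat_l; [repeat apply Rmult_le_pos; lra|lra]).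
      nra. }
    assert (T3 : a*beta*r*(u*u-1) <= a*(1+beta*r)*(u*u-1)).
    { assert (0 <= a*(u*u-1)) by nra. nra. }
    assert (T2 : (2 + beta*a/4)*W*r <= (2 + beta*a/4)*((u+1)*(u+1))*r).
    { apply Rmult_le_compat_r; [lra|]. apply Rmult_le_compat_l; nra. }
    assert (T4 : r*((2 + beta*a/4)*(u+1)*(u+1) + beta*u/4) <= r*(a*beta*(u*u-1))) by (apply Rmult_le_compat_l; lra).
    nra. }
  apply (Rmult_le_compat_r (/ (W*r))) in HN; [|left; apply Rinv_0_lt_compat; nra].
  replace ((2 + beta * a / 4) * W * r * / (W * r)) with (2 + beta*a/4) in HN by (field; nra).
  unfold Rdiv. lra.
Qed.

Lemma trig_b b : 0 < b <= 1/4 ->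
  2*b - 4/3*(b*b*b) <= sin (2*b) <= 2*b /\ 1 - 2*(b*b) <= cos (2*b) <= 1.
Proof.
  intros Hb. pose proof (sin_lb3 (2*b) ltac:(lra)). pose proof (sin_le_id (2*b) ltac:(lra)).
  pose proof (cos_lb2 (2*b) ltac:(lra)). pose proof (COS_bound (2*b)).
  simpl in *. split; split; nra.
Qed.

Lemma WW_pos a b : 0 < b <= 1/4 -> 0 < WW a b.
Proof.
  intros Hb. destruct (trig_b b Hb) as [_ [H1 _]]. unfold WW.
  pose proof (exp_pos (2*a)). fold (uu a) in H. assert (b*b <= 1/16) by nra. nra.
Qed.

Lemma uu_neg a : uu (-a) = / uu a.
Proof. unfold uu. rewrite <- exp_Ropp. f_equal; ring. Qed.

Lemma Fk_sym beta a b : 0 < b <= 1/4 ->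
  Re (Fk beta (mkC (-a) b)) = Re (Fk beta (mkC a b)) /\
  Im (Fk beta (mkC (-a) b)) = - Im (Fk beta (mkC a b)).
Proof.
  intros Hb. pose proof (WW_pos a b Hb). pose proof (WW_pos (-a) b Hb).
  rewrite !Fk_explicit by (lra || (apply Rgt_not_eq; lra)). simpl.
  assert (Hr : 0 < rr a b) by (unfold rr; nra).
  assert (Hu : 0 < uu a) by (apply exp_pos).
  assert (HW : WW (-a) b = WW a b / (uu a * uu a)).
  { unfold WW. rewrite uu_neg. field. lra. }
  assert (Hrr : rr (-a) b = rr a b) by (unfold rr; ring).
  unfold NX, NY. rewrite HW, Hrr, uu_neg. split; field; lra.
Qed.

Lemma Cnorm_sub_R_sym beta a b c : 0 < b <= 1/4 ->
  Cnorm (Csub (Fk beta (mkC (-a) b)) (RtoC c)) = Cnorm (Csub (Fk beta (mkC a b)) (RtoC c)).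
Proof.
  intros Hb. destruct (Fk_sym beta a b Hb) as [H1 H2]. unfold Cnorm; cbn [Re Im Csub RtoC]. rewrite H1, H2. f_equal; ring.
Qed.

Lemma Cnorm_sym beta a b : 0 < b <= 1/4 ->
  Cnorm (Fk beta (mkC (-a) b)) = Cnorm (Fk beta (mkC a b)).
Proof.
  intros Hb. destruct (Fk_sym beta a b Hb) as [H1 H2]. unfold Cnorm; cbn [Re Im Csub RtoC]. rewrite H1, H2. f_equal; ring.
Qed.

Lemma uu_ge a : 0 <= a -> 1 + 2*a <= uu a.
Proof. intros; unfold uu; apply exp_ineq1_le. Qed.

Lemma uu_le a A : a <= A -> uu a <= exp (2*A).
Proof. intros. unfold uu. destruct (Req_dec a A). subst; lra. left; apply exp_increasing; lra. Qed.

Lemma Cerr_pos A U : 0 <= A -> 0 <= U -> 0 <= Cerr A U.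
Proof. intros. unfold Cerr. assert (0 <= A*U) by nra. assert (0 <= A*A*A*U) by (repeat apply Rmult_le_pos; lra).
  assert (0 <= A*A*U) by (repeat apply Rmult_le_pos; lra). nra. Qed.

Lemma norm_FR beta a b c : Rabs (Re (Fk beta (mkC a b)) - c) <= Cnorm (Csub (Fk beta (mkC a b)) (RtoC c)).
Proof. pose proof (Re_le (Csub (Fk beta (mkC a b)) (RtoC c))). cbn [Re Csub RtoC] in H. exact H. Qed.

Lemma norm_FI beta a b c : Rabs (Im (Fk beta (mkC a b))) <= Cnorm (Csub (Fk beta (mkC a b)) (RtoC c)).
Proof. pose proof (Im_le (Csub (Fk beta (mkC a b)) (RtoC c))). cbn [Im Csub RtoC] in H.
  rewrite Rminus_0_r in H. exact H. Qed.

Lemma LR_pos beta : 0 < beta < 1/3 -> forall a0, 0 < a0 ->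
  exists kap b0, 0 < kap /\ 0 < b0 <= 1/4 /\
  forall a b c2, a0 <= a -> 0 < b <= b0 -> 1 <= c2 <= 2 ->
  kap * b * (1 + a) <= Cnorm (Csub (Fk beta (mkC a b)) (RtoC c2)).
Proof.
  intros Hbeta a0 Ha0.
  set (A := 16/beta). assert (HA : 0 < A) by (unfold A; apply Rdiv_lt_0_compat; lra).
  set (U := exp (2*A)). assert (HU : 1 <= U) by (unfold U; pose proof (exp_ineq1_le (2*A)); lra).
  set (K0 := a0 * (2*a0)^6/180). assert (HK0 : 0 < K0) by (unfold K0; pose proof (pow_lt (2*a0) 6); nra).
  set (B := (U+1)*(U+1)*(A*A+1)*(A*(U*U) + U + A*U + U*U)).
  assert (HB : 0 < B).
  { unfold B. assert (0 < A*(U*U)) by (apply Rmult_lt_0_compat; nra). assert (0 < A*U) by nra.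
    apply Rmult_lt_0_compat. repeat apply Rmult_lt_0_compat; nra. nra. }
  pose proof (Cerr_pos A U ltac:(lra) ltac:(lra)) as HC.
  exists (Rmin (beta/8) (K0/(B*(1+A)))), (Rmin (1/4) (K0/(Cerr A U + 1))).
  assert (Hk2 : 0 < K0/(B*(1+A))) by (apply Rdiv_lt_0_compat; nra).
  assert (Hb02 : 0 < K0/(Cerr A U + 1)) by (apply Rdiv_lt_0_compat; lra).
  split; [apply Rmin_glb_lt; lra|]. split. split. apply Rmin_glb_lt; lra. apply Rmin_l.
  intros a b c2 Ha Hb Hc2.
  assert (Hbq : 0 < b <= 1/4) by (pose proof (Rmin_l (1/4) (K0/(Cerr A U + 1))); lra).
  assert (Hbk : b <= K0/(Cerr A U + 1)) by (pose proof (Rmin_r (1/4) (K0/(Cerr A U + 1))); lra).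
  pose proof (WW_pos a b Hbq) as HW0.
  destruct (trig_b b Hbq) as [[HS1 HS2] [HC1 HC2]].
  assert (HS0 : 0 <= sin (2*b)).
  { assert (b*b <= 1/16) by (assert (b*b <= b*(1/4)) by (apply Rmult_le_compat_l; lra); lra).
    assert (b*b*b <= (1/16)*b) by (apply Rmult_le_compat_r; lra). lra. }
  assert (Hu1 : 1 + 2*a <= uu a) by (apply uu_ge; lra).
  pose proof (Fk_explicit beta a b (proj1 Hbq) (Rgt_not_eq _ _ HW0)) as HF.
  assert (Hr : 0 < rr a b) by (unfold rr; nra).
  destruct (Rle_dec A a) as [HaA | HaA].
  -
    pose proof (LR_large beta a b (uu a) (sin (2*b)) (cos (2*b)) c2 Hbeta HaA Hbq Hu1) as L.
    assert (0 <= sin (2*b)) by nra. assert (0 <= cos (2*b)) by nra.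
    specialize (L ltac:(lra) ltac:(lra) ltac:(lra)). simpl in L.
    pose proof (norm_FR beta a b c2) as NR. rewrite HF in NR. cbn [Re] in NR.
    unfold NX, WW, rr in NR. 
    assert (beta*a/4 <= Rabs ((a * (1 + beta * (a * a + b * b)) * (uu a * uu a - 1) -
       2 * b * (beta * (a * a + b * b) - 1) * uu a * sin (2 * b)) /
      ((uu a * uu a + 2 * uu a * cos (2 * b) + 1) * (a * a + b * b)) - c2)).
    { eapply Rle_trans; [exact L|]. apply Rle_abs. }
    assert (Rmin (beta / 8) (K0 / (B * (1 + A))) * b * (1 + a) <= beta/8 * b * (1+a)).
    { apply Rmult_le_compat_r; [lra|]. apply Rmult_le_compat_r; [lra|]. apply Rmin_l. }
    assert (Haa : 1 <= a) by (unfold A in HaA; assert (16/beta >= 1) by (apply Rle_ge; apply (Rmult_le_reg_l beta); [lra|]; field_simplify; lra); lra).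
    assert (b*(1+a) <= 2*a) by nra.
    assert (beta*(b*(1+a)) <= beta*(2*a)) by (apply Rmult_le_compat_l; lra).
    rewrite HF. unfold NX, WW, rr. lra.
  -
    assert (HaA' : a <= A) by lra.
    assert (HuU : uu a <= U) by (apply uu_le; lra).
    assert (Hpsi := psi_u a ltac:(lra)). fold (uu a) in Hpsi.
    replace (uu a ^ 2) with (uu a * uu a) in Hpsi by ring.
    assert (Hb0 : b * b * Cerr A U <= a0 * (2*a0)^6/180).
    { fold K0. assert (b * (Cerr A U + 1) <= K0).
      { apply (Rmult_le_compat_r (Cerr A U + 1)) in Hbk; [|lra]. unfold Rdiv in Hbk.
        rewrite Rmult_assoc, Rinv_l, Rmult_1_r in Hbk by lra. lra. }
      assert (b * b * Cerr A U <= b * Cerr A U) by (apply Rmult_le_compat_r; [lra|]; nra). nra. }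
    pose proof (LR_mid a b (uu a) (sin (2*b)) (cos (2*b)) c2 A U a0 Ha0 (conj Ha HaA') Hbq
      ltac:(lra) Hpsi (conj HS1 HS2) (conj HC1 HC2) ltac:(lra) Hb0) as M.
    cbv zeta in M. fold K0 in M.
    set (u := uu a) in *. set (S := sin (2*b)) in *. set (Co := cos (2*b)) in *.
    set (Dm := a*(u*u-1) - 2*b*u*S) in *. set (Nm := 2*a*u*S + b*(u*u-1)) in *.
    set (W := WW a b) in *. set (r := rr a b) in *.
    assert (HWd : W = u*u + 2*u*Co + 1) by reflexivity.
    assert (Hrd : r = a*a + b*b) by reflexivity.
    set (FR := NX beta a b / (W * r)). set (FI := NY beta a b / (W * r)).
    assert (Hid : -2*a*b*(u*u-1)^2 - 8*a*b*u*u*(S*S) + c2*Nm*(u*u + 2*u*Co + 1)*(a*a+b*b)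
                 = W * r * (Dm * FI - Nm * (FR - c2))).
    { unfold FR, FI. rewrite <- HWd, <- Hrd. field_simplify; [|split; lra].
      unfold NX, NY. fold u S r. unfold Dm, Nm. rewrite Hrd. ring. }
    rewrite Hid in M.
    set (N := Cnorm (Csub (Fk beta (mkC a b)) (RtoC c2))).
    assert (HX : Rabs (FR - c2) <= N) by (unfold N, FR; pose proof (norm_FR beta a b c2); rewrite HF in H |- *; exact H).
    assert (HY : Rabs FI <= N) by (unfold N, FI; pose proof (norm_FI beta a b c2); rewrite HF in H |- *; exact H).
    assert (HDm : Rabs Dm <= A*(U*U) + U).
    { unfold Dm. assert (0 <= a*(u*u-1) <= A*(U*U)).
      { assert (1 <= u*u) by nra. split. apply Rmult_le_pos; lra. assert (u*u <= U*U) by (apply Rmult_le_compat; lra). apply Rmult_le_compat; lra. }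
      assert (0 <= 2*b*u*S <= U).
      { split. repeat apply Rmult_le_pos; lra. assert (b*S <= (1/4)*(1/2)) by (apply Rmult_le_compat; lra).
        assert (2*b*S*u <= 1*u) by (apply Rmult_le_compat_r; lra). nra. }
      unfold Rabs; destruct Rcase_abs; lra. }
    assert (HNm : Rabs Nm <= A*U + U*U).
    { unfold Nm. assert (0 <= 2*a*u*S <= A*U).
      { split. repeat apply Rmult_le_pos; lra. assert (a*u <= A*U) by (apply Rmult_le_compat; lra).
        assert (2*S <= 1) by lra. assert (a*u*(2*S) <= A*U*1) by (apply Rmult_le_compat; try lra; apply Rmult_le_pos; lra). nra. }
      assert (0 <= b*(u*u-1) <= U*U).
      { assert (1 <= u*u) by nra. assert (u*u <= U*U) by (apply Rmult_le_compat; lra). split. apply Rmult_le_pos; lra.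
        assert (b*(u*u-1) <= 1*(U*U)) by (apply Rmult_le_compat; lra). lra. }
      rewrite Rabs_right by lra. lra. }
    assert (HWb : W <= (U+1)*(U+1)) by (rewrite HWd; nra).
    assert (Hrb : r <= A*A+1) by (rewrite Hrd; nra).
    assert (HT : Dm * FI - Nm * (FR - c2) <= (Rabs Dm + Rabs Nm) * N).
    { assert (Dm * FI <= Rabs Dm * N).
      { eapply Rle_trans. apply Rle_abs. rewrite Rabs_mult. apply Rmult_le_compat; try apply Rabs_pos; lra. }
      assert (- (Nm * (FR - c2)) <= Rabs Nm * N).
      { eapply Rle_trans. apply Rle_abs. rewrite Rabs_Ropp, Rabs_mult. apply Rmult_le_compat; try apply Rabs_pos; lra. }
      lra. }
    assert (HN0 : 0 <= N) by apply Cnorm_ge0.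
    assert (HB2 : W * r * ((Rabs Dm + Rabs Nm) * N) <= B * N).
    { replace (W * r * ((Rabs Dm + Rabs Nm) * N)) with ((W*r*(Rabs Dm + Rabs Nm))*N) by ring.
      unfold B. apply Rmult_le_compat_r; [lra|].
      assert (W * r <= (U+1)*(U+1)*(A*A+1)) by (apply Rmult_le_compat; lra).
      assert (Rabs Dm + Rabs Nm <= A*(U*U) + U + A*U + U*U) by lra.
      replace ((U+1)*(U+1)*(A*A+1)*(A*(U*U) + U + A*U + U*U)) with (((U+1)*(U+1)*(A*A+1))*(A*(U*U) + U + A*U + U*U)) by ring.
      apply Rmult_le_compat; try lra. apply Rmult_le_pos; lra. pose proof (Rabs_pos Dm); pose proof (Rabs_pos Nm); lra. }
    assert (HWr : W * r * (Dm * FI - Nm * (FR - c2)) <= W * r * ((Rabs Dm + Rabs Nm) * N)).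
    { apply Rmult_le_compat_l; [apply Rmult_le_pos; lra | exact HT]. }
    assert (Hfin : b * K0 <= B * N) by lra.
    assert (Rmin (beta / 8) (K0 / (B * (1 + A))) * b * (1 + a) <= K0 / (B * (1 + A)) * b * (1+A)).
    { apply Rmult_le_compat; try lra. apply Rmult_le_pos. apply Rmin_glb; lra. lra. apply Rmult_le_compat_r; [lra|apply Rmin_r]. }
    replace (K0 / (B * (1 + A)) * b * (1+A)) with (b * K0 / B) in H by (field; lra).
    assert (b * K0 / B <= N).
    { apply (Rmult_le_reg_l B); [lra|]. replace (B * (b * K0 / B)) with (b * K0) by (field; lra). lra. }
    lra.
Qed.

Lemma F_upper beta a b : 0 < beta < 1/3 -> 0 <= a -> 0 < b <= 1/4 ->
  Cnorm (Fk beta (mkC a b)) <= 2 * (/ rr a b + beta) * (1 + a).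
Proof.
  intros Hbeta Ha Hb. pose proof (WW_pos a b Hb) as HW0.
  destruct (trig_b b Hb) as [[HS1 HS2] [HC1 HC2]].
  assert (HS0 : 0 <= sin (2*b)).
  { assert (b*b <= 1/16) by (assert (b*b <= b*(1/4)) by (apply Rmult_le_compat_l; lra); lra).
    assert (b*b*b <= (1/16)*b) by (apply Rmult_le_compat_r; lra). lra. }
  assert (Hu1 : 1 + 2*a <= uu a) by (apply uu_ge; lra).
  assert (Hr : 0 < rr a b) by (unfold rr; nra).
  rewrite Fk_explicit by lra.
  eapply Rle_trans. apply Cnorm_le_sum. cbn [Re Im].
  set (u := uu a) in *. set (S := sin (2*b)) in *. set (Co := cos (2*b)) in *.
  set (W := WW a b) in *. set (r := rr a b) in *.
  assert (HWd : W = u*u + 2*u*Co + 1) by reflexivity.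
  assert (Hrd : r = a*a + b*b) by reflexivity.
  assert (Hp : 0 < 1 + beta * r) by nra.
  assert (Hbb : b*b <= 1/16) by (assert (b*b <= b*(1/4)) by (apply Rmult_le_compat_l; lra); lra).
  assert (HCo0 : 0 <= Co) by lra. assert (Hu0 : 1 <= u) by lra.
  assert (0 <= u*Co) by (apply Rmult_le_pos; lra).
  assert (H2u : 2*u <= W) by (rewrite HWd; nra). assert (Hu2 : 0 <= u*u - 1 <= W) by (rewrite HWd; nra).
  assert (HX : Rabs (NX beta a b) <= (1 + beta*r) * W * (a + 2*(b*b))).
  { unfold NX. fold u S r. eapply Rle_trans. apply Rabs_triang.
    rewrite Rabs_Ropp, !Rabs_mult. rewrite (Rabs_right a), (Rabs_right (1+beta*r)), (Rabs_right (u*u-1)), (Rabs_right u), (Rabs_right S), (Rabs_right 2), (Rabs_right b) by lra.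
    assert (Rabs (beta*r - 1) <= 1 + beta*r) by (unfold Rabs; destruct Rcase_abs; nra).
    assert (a * (1 + beta*r) * (u*u-1) <= a * (1+beta*r) * W) by (apply Rmult_le_compat_l; nra).
    assert (2 * b * Rabs (beta * r - 1) * u * S <= 2*b*(1+beta*r)*u*(2*b)).
    { assert (0 <= Rabs (beta*r-1)) by apply Rabs_pos.
      replace (2 * b * Rabs (beta * r - 1) * u * S) with ((2*b*u) * (Rabs (beta*r-1) * S)) by ring.
      replace (2*b*(1+beta*r)*u*(2*b)) with ((2*b*u) * ((1+beta*r)*(2*b))) by ring.
      apply Rmult_le_compat_l. nra. apply Rmult_le_compat; lra. }
    assert (2*b*(1+beta*r)*u*(2*b) = (b*b*2)*(1+beta*r)*(2*u)) by ring.
    assert ((b*b*2)*(1+beta*r)*(2*u) <= (b*b*2)*(1+beta*r)*W) by (apply Rmult_le_compat_l; [apply Rmult_le_pos; nra|lra]).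
    nra. }
  assert (HY : Rabs (NY beta a b) <= (1 + beta*r) * W * (2*a*b + b)).
  { unfold NY. fold u S r. eapply Rle_trans. apply Rabs_triang.
    rewrite !Rabs_mult. rewrite (Rabs_right a), (Rabs_right (1+beta*r)), (Rabs_right (u*u-1)), (Rabs_right u), (Rabs_right S), (Rabs_right 2), (Rabs_right b) by lra.
    assert (Rabs (beta*r - 1) <= 1 + beta*r) by (unfold Rabs; destruct Rcase_abs; nra).
    assert (2 * a * (1 + beta * r) * u * S <= a*(1+beta*r)*W*(2*b)).
    { replace (2 * a * (1 + beta * r) * u * S) with ((a*(1+beta*r))*((2*u)*S)) by ring.
      replace (a*(1+beta*r)*W*(2*b)) with ((a*(1+beta*r))*(W*(2*b))) by ring.
      apply Rmult_le_compat_l. nra. apply Rmult_le_compat; lra. }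
    assert (b * Rabs (beta * r - 1) * (u * u - 1) <= b*(1+beta*r)*W).
    { replace (b * Rabs (beta * r - 1) * (u * u - 1)) with (b * (Rabs (beta * r - 1) * (u * u - 1))) by ring.
      replace (b*(1+beta*r)*W) with (b*((1+beta*r)*W)) by ring.
      apply Rmult_le_compat_l. lra. apply Rmult_le_compat; try lra. apply Rabs_pos. }
    nra. }
  assert (HWr : 0 < W * r) by nra.
  assert (HI : 0 < / (W*r)) by (apply Rinv_0_lt_compat; lra).
  unfold Rdiv. rewrite !Rabs_mult, (Rabs_right (/ (W*r))) by lra. fold (Rdiv (Rabs (NX beta a b)) (W*r)) (Rdiv (Rabs (NY beta a b)) (W*r)).
  assert (E : (1 + beta*r) * W * (a + 2*(b*b)) / (W*r) + (1 + beta*r) * W * (2*a*b + b) / (W*r)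
     = (/ r + beta) * (a + 2*(b*b) + 2*a*b + b)) by (field; lra).
  assert (a + 2*(b*b) + 2*a*b + b <= 2 * (1 + a)) by nra.
  assert (0 <= / r + beta) by (pose proof (Rinv_0_lt_compat r Hr); lra).
  assert ((/ r + beta) * (a + 2*(b*b) + 2*a*b + b) <= (/ r + beta) * (2*(1+a))) by (apply Rmult_le_compat_l; lra).
  assert (Rabs (NX beta a b) / (W*r) <= (1 + beta*r) * W * (a + 2*(b*b)) / (W*r)) by (apply Rmult_le_compat_r; [left; apply Rinv_0_lt_compat; lra| lra]).
  assert (Rabs (NY beta a b) / (W*r) <= (1 + beta*r) * W * (2*a*b + b) / (W*r)) by (apply Rmult_le_compat_r; [left; apply Rinv_0_lt_compat; lra| lra]).
  nra.
Qed.

Lemma k_eq eps K q : Cmul (RtoC eps) (mkC K q) = mkC (eps*K) (eps*q).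
Proof. apply Cext; simpl; ring. Qed.

Lemma Cnorm_mkC x y : Cnorm (mkC x y) * Cnorm (mkC x y) = x*x + y*y.
Proof. rewrite Cnorm_sq. unfold N2. reflexivity. Qed.

Lemma w_lower K q : 0 < q <= 1/2 ->
  (1 + (K*K + q*q))/2 <= Cnorm (Cadd (RtoC 1) (Cmul (mkC K q) (mkC K q))).
Proof.
  intros Hq. apply sq_le_norm. apply Cnorm_ge0. rewrite Cnorm_sq. unfold N2. simpl.
  assert (1 + K*K - q*q >= (1 + (K*K + q*q))/2) by nra.
  assert (0 <= (1 + (K*K+q*q))/2) by nra.
  assert (0 <= K*q*(K*q)) by nra. nra.
Qed.

Lemma D_ident (F : Defs.C) c : Cmul (Csub (Csqrt F) (RtoC c)) (Cadd (Csqrt F) (RtoC c)) = Csub F (RtoC (c*c)).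
Proof.
  pose proof (Csqrt_sq F). set (m := Csqrt F) in *.
  transitivity (Csub (Cmul m m) (RtoC (c*c))). apply Cext; simpl; ring. rewrite H; reflexivity.
Qed.

Lemma mc_lower (F : Defs.C) c : 1 <= c -> 1 <= Cnorm (Cadd (Csqrt F) (RtoC c)).
Proof.
  intros. pose proof (Csqrt_Re F). pose proof (Re_le (Cadd (Csqrt F) (RtoC c))).
  cbn [Re Cadd RtoC] in H1. pose proof (Rle_abs (Re (Csqrt F) + c)). lra.
Qed.

Lemma mc_upper (F : Defs.C) c : 0 <= c -> Cnorm (Cadd (Csqrt F) (RtoC c)) <= sqrt (Cnorm F) + c.
Proof.
  intros. eapply Rle_trans. apply Cnorm_triang. rewrite Csqrt_norm, Cnorm_RtoC, Rabs_right by lra. lra.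
Qed.

Lemma D_lower (F : Defs.C) c X : 1 <= c -> 0 < X -> Cnorm (Cadd (Csqrt F) (RtoC c)) <= X ->
  Cnorm (Csub F (RtoC (c*c))) / X <= Cnorm (Csub (Csqrt F) (RtoC c)).
Proof.
  intros Hc HX HB. rewrite <- D_ident, Cnorm_mul.
  pose proof (Cnorm_ge0 (Csub (Csqrt F) (RtoC c))).
  assert (Cnorm (Csub (Csqrt F) (RtoC c)) * Cnorm (Cadd (Csqrt F) (RtoC c)) <= Cnorm (Csub (Csqrt F) (RtoC c)) * X)
    by (apply Rmult_le_compat_l; lra).
  apply (Rmult_le_reg_r X); [lra|]. unfold Rdiv. rewrite Rmult_assoc, Rinv_l, Rmult_1_r by lra. lra.
Qed.

Lemma E_ident (F k : Defs.C) g :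
  Cmul (Cadd (Csub (Csqrt F) (RtoC 1)) (Cmul (RtoC g) (Cmul k k))) (Cadd (Csqrt F) (RtoC 1)) =
  Cadd (Cadd (Csub F (RtoC 1)) (Cmul (RtoC (2*g)) (Cmul k k))) (Cmul (Cmul (RtoC g) (Cmul k k)) (Csub (Csqrt F) (RtoC 1))).
Proof.
  pose proof (Csqrt_sq F). set (m := Csqrt F) in *.
  transitivity (Cadd (Cadd (Csub (Cmul m m) (RtoC 1)) (Cmul (RtoC (2*g)) (Cmul k k))) (Cmul (Cmul (RtoC g) (Cmul k k)) (Csub m (RtoC 1)))).
  apply Cext; simpl; ring. rewrite H; reflexivity.
Qed.

Lemma m1_ident (F : Defs.C) : Cmul (Csub (Csqrt F) (RtoC 1)) (Cadd (Csqrt F) (RtoC 1)) = Csub F (RtoC 1).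
Proof. pose proof (D_ident F 1). rewrite Rmult_1_r in H. exact H. Qed.

Lemma sqrt_half x : 0 <= x -> sqrt x <= (1 + x)/2.
Proof. intros. pose proof (sqrt_sqrt x H). pose proof (Rle_0_sqr (sqrt x - 1)). unfold Rsqr in *. nra. Qed.

Lemma gamma_range beta : 0 < beta < 1/3 -> 0 < gamma_beta beta < 1/6.
Proof. unfold gamma_beta; lra. Qed.

Lemma small_regime beta eps K q : 0 < beta < 1/3 -> 0 < q <= 1/2 -> 0 < eps <= 1 ->
  Cnorm (mkC (eps*K) (eps*q)) <= gamma_beta beta / 28 ->
  let g := gamma_beta beta in
  let k := mkC (eps*K) (eps*q) in let F := Fk beta k in let c := 1 + g*(eps*eps) in
  let rho := Cnorm k in
  g/8 * (eps*eps) * (1 + (K*K + q*q)) <= Cnorm (Csub (Csqrt F) (RtoC c)) /\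
  Cnorm (Cadd (Csub (Csqrt F) (RtoC 1)) (Cmul (RtoC g) (Cmul k k))) <= 8 * (rho*rho*rho).
Proof.
  intros Hb Hq He Hr g k F c rho.
  pose proof (gamma_range beta Hb) as Hg. fold g in Hg.
  assert (Hr0 : 0 <= rho) by apply Cnorm_ge0.
  assert (Hrd : rho <= g/28) by exact Hr.
  assert (Hk0 : k <> RtoC 0).
  { intro H. assert (Im k = 0) by (rewrite H; reflexivity). simpl in H0. nra. }
  assert (Hr14 : rho <= 1/4) by lra.
  pose proof (F_taylor beta k Hb Hk0 Hr14) as HT. fold F g rho in HT.
  set (err := Cadd (Csub F (RtoC 1)) (Cmul (RtoC (2 * g)) (Cmul k k))) in *.
  set (R := K*K + q*q).
  assert (HrR : rho * rho = eps*eps*R) by (unfold rho, k, R; rewrite Cnorm_mkC; ring).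
  assert (HkN : Cnorm (Cmul k k) = rho * rho) by (rewrite Cnorm_mul; reflexivity).
  assert (Hr3 : 7 * (rho*rho*rho) <= g/4 * (rho*rho)) by (assert (0 <= rho*rho) by nra; nra).
  assert (HF1 : Cnorm (Csub F (RtoC 1)) <= 7*(rho*rho*rho) + 2*g*(rho*rho)).
  { replace (Csub F (RtoC 1)) with (Csub err (Cmul (RtoC (2*g)) (Cmul k k))) by (unfold err; ring).
    eapply Rle_trans. apply Cnorm_sub_le. rewrite Cnorm_mul, Cnorm_RtoC, Rabs_right, HkN by lra. lra. }
  assert (Hsm : 7*(rho*rho*rho) + 2*g*(rho*rho) <= rho).
  { assert (rho*rho <= rho/100) by nra. assert (rho*rho*rho <= rho*rho/100) by nra. nra. }
  split.
  - set (w := Cadd (RtoC 1) (Cmul (mkC K q) (mkC K q))).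
    pose proof (w_lower K q Hq) as Hw. fold w R in Hw.
    assert (HI : Csub F (RtoC (c*c)) = Csub (Csub err (Cmul (RtoC (2*g*(eps*eps))) w)) (RtoC (g*g*(eps*eps*(eps*eps))))).
    { unfold err, w, c, k. apply Cext; simpl; ring. }
    assert (HFc : g * (eps*eps) * (1 + R) - 7*(rho*rho*rho) - g*g*(eps*eps*(eps*eps)) <= Cnorm (Csub F (RtoC (c*c)))).
    { rewrite HI. eapply Rle_trans; [|apply Cnorm_rev2]. rewrite Cnorm_RtoC, Rabs_right by nra.
      pose proof (Cnorm_rev2 (Cmul (RtoC (2*g*(eps*eps))) w) err).
      assert (Cnorm (Csub err (Cmul (RtoC (2 * g * (eps * eps))) w)) = Cnorm (Csub (Cmul (RtoC (2 * g * (eps * eps))) w) err)).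
      { replace (Csub err (Cmul (RtoC (2 * g * (eps * eps))) w)) with (Copp (Csub (Cmul (RtoC (2 * g * (eps * eps))) w) err)) by ring.
        apply Cnorm_opp. }
      rewrite Cnorm_mul, Cnorm_RtoC, Rabs_right in H by nra.
      assert (2 * g * (eps * eps) * ((1 + R)/2) <= 2 * g * (eps * eps) * Cnorm w) by (apply Rmult_le_compat_l; nra).
      lra. }
    assert (Hlow : g/2 * (eps*eps) * (1+R) <= Cnorm (Csub F (RtoC (c*c)))).
    { assert (g*g*(eps*eps*(eps*eps)) <= g/6*(eps*eps)).
      { assert (eps*eps <= 1) by nra. assert (0 <= eps*eps) by nra.
        assert (g*(eps*eps) <= 1/6) by nra. assert (0 <= g*(eps*eps)) by nra. nra. }
      assert (0 <= eps*eps*R) by (unfold R; nra).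
      assert (g/4*(rho*rho) = g/4*(eps*eps*R)) by (rewrite HrR; ring).
      assert (0 <= g*(eps*eps*R)) by (apply Rmult_le_pos; lra).
      assert (0 <= g*(eps*eps)) by (apply Rmult_le_pos; nra).
      lra. }
    assert (HFn : Cnorm F <= 2).
    { pose proof (Cnorm_triang (Csub F (RtoC 1)) (RtoC 1)).
      replace (Cadd (Csub F (RtoC 1)) (RtoC 1)) with F in H by ring. rewrite Cnorm_RtoC, Rabs_R1 in H. lra. }
    assert (Hmc : Cnorm (Cadd (Csqrt F) (RtoC c)) <= 4).
    { eapply Rle_trans. apply mc_upper. unfold c; nra.
      pose proof (sqrt_half (Cnorm F) (Cnorm_ge0 F)). assert (g*(eps*eps) <= 1/6) by nra. unfold c. lra. }
    pose proof (D_lower F c 4 ltac:(unfold c; nra) ltac:(lra) Hmc).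
    lra.
  - assert (Hm1 : Cnorm (Csub (Csqrt F) (RtoC 1)) <= rho).
    { pose proof (m1_ident F). pose proof (mc_lower F 1 ltac:(lra)).
      assert (Cnorm (Csub (Csqrt F) (RtoC 1)) * 1 <= Cnorm (Csub (Csqrt F) (RtoC 1)) * Cnorm (Cadd (Csqrt F) (RtoC 1)))
        by (apply Rmult_le_compat_l; [apply Cnorm_ge0|lra]).
      rewrite <- Cnorm_mul, H in H1. lra. }
    pose proof (E_ident F k g). fold err in H.
    pose proof (mc_lower F 1 ltac:(lra)).
    set (E := Cadd (Csub (Csqrt F) (RtoC 1)) (Cmul (RtoC g) (Cmul k k))) in *.
    assert (Cnorm E * 1 <= Cnorm E * Cnorm (Cadd (Csqrt F) (RtoC 1))) by (apply Rmult_le_compat_l; [apply Cnorm_ge0|lra]).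
    rewrite <- Cnorm_mul, H in H1.
    assert (Cnorm (Cmul (Cmul (RtoC g) (Cmul k k)) (Csub (Csqrt F) (RtoC 1))) <= g * (rho*rho) * rho).
    { rewrite !Cnorm_mul, Cnorm_RtoC, Rabs_right by lra. fold rho.
      apply Rmult_le_compat_l; [nra|lra]. }
    pose proof (Cnorm_triang err (Cmul (Cmul (RtoC g) (Cmul k k)) (Csub (Csqrt F) (RtoC 1)))).
    assert (g * (rho*rho) * rho <= rho*rho*rho) by (assert (0 <= rho*rho*rho) by (repeat apply Rmult_le_pos; lra); nra).
    lra.
Qed.

Lemma large_regime beta kap b0 eps K q :
  0 < beta < 1/3 -> 0 < kap -> 0 < b0 <= 1/4 ->
  (forall a b c2, gamma_beta beta / 28 / 2 <= a -> 0 < b <= b0 -> 1 <= c2 <= 2 ->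
     kap * b * (1 + a) <= Cnorm (Csub (Fk beta (mkC a b)) (RtoC c2))) ->
  0 < q <= 1/2 -> 0 < eps <= 1 -> eps * q <= b0 -> eps * q <= gamma_beta beta / 28 / 2 ->
  gamma_beta beta / 28 <= Cnorm (mkC (eps*K) (eps*q)) ->
  let g := gamma_beta beta in let d := g / 28 in
  let k := mkC (eps*K) (eps*q) in let F := Fk beta k in let c := 1 + g*(eps*eps) in
  let rho := Cnorm k in let M := 2 * (/ (d*d) + beta) in let s := sqrt (1 + Rabs (eps*K)) in
  kap / (sqrt M + 2) * (eps*q) * s <= Cnorm (Csub (Csqrt F) (RtoC c)) /\
  Cnorm (Cadd (Csub (Csqrt F) (RtoC 1)) (Cmul (RtoC g) (Cmul k k))) <= (sqrt M + 1) * s + g * (rho*rho).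
Proof.
  intros Hbeta Hkap Hb0 HLR Hq He Hbq Hbd Hrd g d k F c rho M s.
  pose proof (gamma_range beta Hbeta) as Hg. fold g in Hg.
  assert (Hd : 0 < d) by (unfold d; lra).
  fold g d in Hbd, Hrd, HLR. fold k rho in Hrd.
  set (a := eps*K) in *. set (b := eps*q) in *.
  assert (Hb : 0 < b <= 1/4) by (split; [unfold b; nra | lra]).
  assert (Hrr : rho*rho = a*a + b*b) by (unfold rho, k; apply Cnorm_mkC).
  assert (Ha : d/2 <= Rabs a).
  { assert (d*d <= rho*rho) by nra. assert (b*b <= d/2*(d/2)) by nra.
    assert (d/2*(d/2) <= a*a) by nra. rewrite <- (Rabs_right (d/2)) by lra.
    apply Rsqr_le_abs_0. unfold Rsqr. lra. }
  assert (Hee : 0 <= eps*eps <= 1) by (split; nra).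
  assert (Hge : 0 <= g*(eps*eps) <= 1/6) by (split; [apply Rmult_le_pos; lra | assert (g*(eps*eps) <= (1/6)*1) by (apply Rmult_le_compat; lra); lra]).
  assert (Hc1 : 1 <= c) by (unfold c; lra).
  assert (Hc2 : c*c <= 2) by (unfold c; nra).
  assert (HFc : kap * b * (1 + Rabs a) <= Cnorm (Csub F (RtoC (c*c)))).
  { unfold F, k. destruct (Rle_lt_dec 0 a).
    - assert (Habs : Rabs a = a) by (apply Rabs_right; lra). rewrite Habs in Ha |- *. apply HLR; [lra | lra | split; nra].
    - assert (Habs2 : Rabs a = - a) by (apply Rabs_left; lra). rewrite Habs2 in Ha |- *.
      replace (mkC a b) with (mkC (- (-a)) b) by (f_equal; ring). rewrite Cnorm_sub_R_sym by lra. apply HLR; [lra | lra | split; nra]. }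
  assert (HFu : Cnorm F <= M * (1 + Rabs a)).
  { assert (Cnorm F <= 2 * (/ rr (Rabs a) b + beta) * (1 + Rabs a)).
    { unfold F, k. destruct (Rle_lt_dec 0 a).
      - rewrite Rabs_right by lra. apply F_upper; auto; lra.
      - rewrite Rabs_left by lra. replace (mkC a b) with (mkC (- (-a)) b) by (f_equal; ring). rewrite Cnorm_sym by lra.
        apply F_upper; auto; lra. }
    assert (rr (Rabs a) b = rho*rho) by (unfold rr; rewrite Hrr; rewrite <- Rabs_mult, Rabs_right by nra; ring).
    rewrite H0 in H.
    assert (/ (rho*rho) <= / (d*d)) by (apply Rinv_le_contravar; nra).
    unfold M. eapply Rle_trans; [exact H|]. apply Rmult_le_compat_r. pose proof (Rabs_pos a); lra. lra. }
  assert (Hs1 : 1 <= s) by (unfold s; apply Rle_trans with (sqrt 1); [rewrite sqrt_1; lra | apply sqrt_le_1_alt; pose proof (Rabs_pos a); lra]).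
  assert (Hss : s * s = 1 + Rabs a) by (unfold s; apply sqrt_sqrt; pose proof (Rabs_pos a); lra).
  assert (HM0 : 0 <= M) by (unfold M; assert (0 < / (d*d)) by (apply Rinv_0_lt_compat; nra); lra).
  assert (HsF : sqrt (Cnorm F) <= sqrt M * s).
  { unfold s. rewrite <- sqrt_mult by (try lra; pose proof (Rabs_pos a); lra). apply sqrt_le_1_alt. exact HFu. }
  pose proof (sqrt_pos M) as HsM.
  split.
  - assert (Hmc : Cnorm (Cadd (Csqrt F) (RtoC c)) <= (sqrt M + 2) * s).
    { eapply Rle_trans. apply mc_upper. lra. nra. }
    pose proof (D_lower F c ((sqrt M + 2) * s) Hc1 ltac:(nra) Hmc) as HD.
    eapply Rle_trans; [|exact HD].
    apply (Rmult_le_reg_r ((sqrt M + 2) * s)); [nra|].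
    replace (Cnorm (Csub F (RtoC (c*c))) / ((sqrt M + 2)*s) * ((sqrt M + 2)*s)) with (Cnorm (Csub F (RtoC (c*c)))) by (field; nra).
    replace (kap / (sqrt M + 2) * b * s * ((sqrt M + 2) * s)) with (kap * b * (s*s)) by (field; lra).
    rewrite Hss. lra.
  - eapply Rle_trans. apply Cnorm_triang.
    rewrite Cnorm_mul, Cnorm_RtoC, Rabs_right, Cnorm_mul by lra. fold rho.
    pose proof (Cnorm_sub_le (Csqrt F) (RtoC 1)). rewrite Csqrt_norm, Cnorm_RtoC, Rabs_R1 in H.
    nra.
Qed.

Lemma final_ident (l w : Defs.C) g : l <> RtoC 0 -> w <> RtoC 0 -> g <> 0 ->
  Cadd (Cinv l) (Cmul (RtoC (/ g)) (Cinv w)) =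
  Cmul (Cmul (Cmul (Cadd l (Cmul (RtoC g) w)) (Cinv l)) (Cinv w)) (RtoC (/ g)).
Proof.
  intros Hl Hw Hg. pose proof (Cinv_r l Hl). pose proof (Cinv_r w Hw).
  assert (Hgg : Cmul (RtoC g) (RtoC (/g)) = RtoC 1) by (apply Cext; simpl; field; auto).
  transitivity (Cadd (Cmul (Cmul (Cmul l (Cinv l)) (Cinv w)) (RtoC (/g)))
                     (Cmul (Cmul (RtoC g) (RtoC (/g))) (Cmul (Cmul w (Cinv w)) (Cinv l)))).
  rewrite H, H0, Hgg. ring. ring.
Qed.

Lemma ssqrt_le x : 1 <= x -> sqrt (sqrt x) <= x.
Proof.
  intros. assert (sqrt x <= x).
  { pose proof (sqrt_sqrt x ltac:(lra)). pose proof (sqrt_pos x).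
    assert (1 <= sqrt x) by (rewrite <- sqrt_1; apply sqrt_le_1_alt; lra). nra. }
  assert (1 <= sqrt x) by (rewrite <- sqrt_1; apply sqrt_le_1_alt; lra).
  assert (sqrt (sqrt x) <= sqrt x).
  { pose proof (sqrt_sqrt (sqrt x) ltac:(lra)). pose proof (sqrt_pos (sqrt x)).
    assert (1 <= sqrt (sqrt x)) by (rewrite <- sqrt_1; apply sqrt_le_1_alt; lra). nra. }
  lra.
Qed.

Lemma ssqrt_large K eps : 0 < eps <= 1 -> sqrt (sqrt (1 + K*K)) * eps <= sqrt (1 + Rabs (eps*K)).
Proof.
  intros He. set (t := sqrt (sqrt (1 + K*K))).
  assert (Ht : t * t = sqrt (1 + K*K)) by (unfold t; apply sqrt_sqrt; apply sqrt_pos).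
  assert (Hs : sqrt (1 + K*K) <= 1 + Rabs K).
  { apply sq_le_norm. pose proof (Rabs_pos K); lra. rewrite sqrt_sqrt by nra.
    pose proof (Rabs_pos K). assert (Rabs K * Rabs K = K * K) by (rewrite <- Rabs_mult; apply Rabs_right; nra). nra. }
  apply sq_le_norm. apply sqrt_pos. rewrite sqrt_sqrt by (pose proof (Rabs_pos (eps*K)); lra).
  rewrite Rabs_mult, (Rabs_right eps) by lra.
  pose proof (Rabs_pos K). pose proof (sqrt_pos (1 + K*K)).
  replace (t * eps * (t * eps)) with ((t*t) * (eps*eps)) by ring. rewrite Ht.
  assert (sqrt (1 + K * K) * (eps*eps) <= (1 + Rabs K) * (eps * eps)) by (apply Rmult_le_compat_r; nra).
  assert (eps*eps <= eps) by nra. assert ((1 + Rabs K) * (eps*eps) <= (1 + Rabs K) * eps) by (apply Rmult_le_compat_l; lra).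
  nra.
Qed.

Theorem lemmaA2 (beta : R) (hb : 0 < beta < 1/3) :
  exists eps0 q0 : R, 0 < eps0 /\ 0 < q0 /\
  forall q : R, 0 < q <= q0 ->
  exists Cq : R, 0 < Cq /\
  forall eps : R, 0 < eps <= eps0 ->
  forall K : R,
    let Z := mkC K q in
    l_eps beta eps Z <> RtoC 0 /\
    sqrt (sqrt (1 + K * K)) * Cnorm (Cinv (l_eps beta eps Z)) <= Cq /\
    Cnorm (Cadd (Cinv (l_eps beta eps Z))
                (Cmul (RtoC (/ gamma_beta beta))
                      (Cinv (Cadd (RtoC 1) (Cmul Z Z))))) <= Cq * eps.
Proof.
  pose proof (gamma_range beta hb) as Hg. set (g := gamma_beta beta) in *.
  set (d := g / 28). assert (Hd : 0 < d) by (unfold d; lra).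
  destruct (LR_pos beta hb (g/28/2) ltac:(lra)) as [kap [b0 [Hkap [Hb0 HLR]]]].
  exists (Rmin 1 (Rmin (2*b0) d)), (1/2).
  assert (He0 : 0 < Rmin 1 (Rmin (2*b0) d)) by (repeat apply Rmin_glb_lt; lra).
  split; [exact He0|]. split; [lra|].
  intros q Hq.
  set (M := 2 * (/ (d*d) + beta)). set (sM := sqrt M). assert (HsM : 0 <= sM) by apply sqrt_pos.
  set (k2 := kap / (sM + 2)). assert (Hk2 : 0 < k2) by (unfold k2; apply Rdiv_lt_0_compat; lra).
  set (C1 := 8/g). set (C2 := 128/(g*g)). set (C3 := 1/(k2*q)). set (C4 := 2*((sM+1)/(d*d) + g)/(g*k2*q)).
  assert (HC1 : 0 < C1) by (unfold C1; apply Rdiv_lt_0_compat; lra).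
  assert (HC2 : 0 < C2) by (unfold C2; apply Rdiv_lt_0_compat; nra).
  assert (HC3 : 0 < C3) by (unfold C3; apply Rdiv_lt_0_compat; nra).
  assert (HC4 : 0 < C4).
  { unfold C4. apply Rdiv_lt_0_compat. assert (0 < (sM+1)/(d*d)) by (apply Rdiv_lt_0_compat; nra). lra.
    apply Rmult_lt_0_compat; [nra|lra]. }
  exists (C1 + C2 + C3 + C4). split; [lra|].
  intros eps He K Z.
  assert (He1 : eps <= 1) by (pose proof (Rmin_l 1 (Rmin (2*b0) d)); lra).
  assert (Heb : eps * q <= b0).
  { pose proof (Rmin_r 1 (Rmin (2*b0) d)). pose proof (Rmin_l (2*b0) d). nra. }
  assert (Hed : eps * q <= d/2).
  { pose proof (Rmin_r 1 (Rmin (2*b0) d)). pose proof (Rmin_r (2*b0) d). nra. }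
  assert (He' : 0 < eps <= 1) by lra.
  set (k := mkC (eps*K) (eps*q)).
  set (F := Fk beta k). set (c := 1 + g*(eps*eps)).
  set (D := Csub (Csqrt F) (RtoC c)).
  set (E := Cadd (Csub (Csqrt F) (RtoC 1)) (Cmul (RtoC g) (Cmul k k))).
  set (w := Cadd (RtoC 1) (Cmul Z Z)).
  set (R := K*K + q*q).
  assert (Hl : l_eps beta eps Z = Cmul (RtoC (/ (eps*eps))) D).
  { unfold l_eps, Z. rewrite k_eq. reflexivity. }
  rewrite Hl.
  assert (Hw : (1 + R)/2 <= Cnorm w) by (apply w_lower; lra).
  assert (HR0 : 0 <= R) by (unfold R; nra).
  assert (Hw0 : w <> RtoC 0) by (intro H; rewrite H, Cnorm_RtoC, Rabs_R0 in Hw; lra).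
  assert (Hee : 0 < eps*eps) by nra.
  assert (HlE : Cadd (Cmul (RtoC (/ (eps*eps))) D) (Cmul (RtoC g) w) = Cmul (RtoC (/ (eps*eps))) E).
  { unfold D, E, w, c, Z, k. apply Cext; simpl; field; lra. }
  set (rho := Cnorm k).
  assert (Hrho : rho * rho = eps*eps*R) by (unfold rho, k, R; rewrite Cnorm_mkC; ring).
  assert (Hrho0 : 0 <= rho) by apply Cnorm_ge0.
  assert (Hmain : forall Lw, 0 < Lw -> Lw <= Cnorm D ->
     (sqrt (sqrt (1 + K*K)) * (eps*eps) <= (C1 + C2 + C3 + C4) * Lw) ->
     (Cnorm E <= (C1 + C2 + C3 + C4) * eps * (g * Lw * Cnorm w)) ->
     Cmul (RtoC (/ (eps*eps))) D <> RtoC 0 /\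
     sqrt (sqrt (1 + K * K)) * Cnorm (Cinv (Cmul (RtoC (/ (eps*eps))) D)) <= C1 + C2 + C3 + C4 /\
     Cnorm (Cadd (Cinv (Cmul (RtoC (/ (eps*eps))) D)) (Cmul (RtoC (/ g)) (Cinv w))) <= (C1 + C2 + C3 + C4) * eps).
  { intros Lw HLw HLD H2 H3.
    set (l := Cmul (RtoC (/ (eps*eps))) D) in *.
    assert (HlN : Cnorm l = Cnorm D / (eps*eps)).
    { unfold l. rewrite Cnorm_mul, Cnorm_RtoC, Rabs_right. field; lra. left; apply Rinv_0_lt_compat; lra. }
    assert (HlL : Lw / (eps*eps) <= Cnorm l) by (rewrite HlN; apply Rmult_le_compat_r; [left; apply Rinv_0_lt_compat|]; lra).
    assert (Hlp : 0 < Lw / (eps*eps)) by (apply Rdiv_lt_0_compat; lra).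
    assert (Hl0 : l <> RtoC 0) by (intro H; rewrite H, Cnorm_RtoC, Rabs_R0 in HlL; lra).
    split; [exact Hl0|]. split.
    - rewrite Cnorm_inv by auto.
      apply (Rmult_le_reg_r (Cnorm l)); [lra|]. rewrite Rmult_assoc, Rinv_l, Rmult_1_r by lra.
      assert ((C1 + C2 + C3 + C4) * (Lw / (eps*eps)) <= (C1 + C2 + C3 + C4) * Cnorm l) by (apply Rmult_le_compat_l; lra).
      assert (sqrt (sqrt (1 + K * K)) <= (C1 + C2 + C3 + C4) * (Lw / (eps*eps))).
      { apply (Rmult_le_reg_r (eps*eps)); [lra|]. replace ((C1 + C2 + C3 + C4) * (Lw / (eps * eps)) * (eps * eps)) with ((C1 + C2 + C3 + C4) * Lw) by (field; lra). lra. }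
      lra.
    - rewrite final_ident by (auto; lra). rewrite HlE.
      rewrite !Cnorm_mul, !Cnorm_inv, !Cnorm_RtoC by auto.
      rewrite !Rabs_right by (left; apply Rinv_0_lt_compat; lra).
      assert (Hwp : 0 < Cnorm w) by lra.
      pose proof (Cnorm_ge0 E).
      apply (Rmult_le_reg_r (Cnorm l * Cnorm w * g)); [repeat apply Rmult_lt_0_compat; lra|].
      replace (/ (eps * eps) * Cnorm E * / Cnorm l * / Cnorm w * / g * (Cnorm l * Cnorm w * g)) with (Cnorm E / (eps*eps)) by (field; repeat split; lra).
      assert ((C1 + C2 + C3 + C4) * eps * (g * (Lw / (eps*eps)) * Cnorm w) <= (C1 + C2 + C3 + C4) * eps * (Cnorm l * Cnorm w * g)).
      { apply Rmult_le_compat_l; [nra|]. assert (g * (Lw/(eps*eps)) <= g * Cnorm l) by (apply Rmult_le_compat_l; lra).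
        replace (Cnorm l * Cnorm w * g) with ((g * Cnorm l) * Cnorm w) by ring. apply Rmult_le_compat_r; lra. }
      assert (Cnorm E / (eps*eps) <= (C1 + C2 + C3 + C4) * eps * (g * (Lw / (eps*eps)) * Cnorm w)).
      { apply (Rmult_le_reg_r (eps*eps)); [lra|].
        replace (Cnorm E / (eps * eps) * (eps * eps)) with (Cnorm E) by (field; lra).
        replace ((C1 + C2 + C3 + C4) * eps * (g * (Lw / (eps * eps)) * Cnorm w) * (eps * eps)) with ((C1 + C2 + C3 + C4) * eps * (g * Lw * Cnorm w)) by (field; lra).
        lra. }
      lra. }
  assert (HCq : 0 <= C2 + C3 + C4) by lra.
  destruct (Rle_lt_dec rho d) as [Hsm | Hlg].
  - destruct (small_regime beta eps K q hb ltac:(lra) He' Hsm) as [S1 S2].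
    cbv zeta in S1, S2. fold g k F c D E rho R in S1, S2.
    assert (HL0 : 0 < g/8*(eps*eps)*(1+R)) by (apply Rmult_lt_0_compat; [apply Rmult_lt_0_compat|]; lra).
    apply (Hmain (g/8*(eps*eps)*(1+R)) HL0 S1).
    + assert (sqrt (sqrt (1 + K*K)) <= 1 + R) by (pose proof (ssqrt_le (1 + K*K) ltac:(nra)); unfold R; nra).
      assert (C1 * (g/8*(eps*eps)*(1+R)) = (eps*eps)*(1+R)) by (unfold C1; field; lra).
      assert (0 <= (C2 + C3 + C4) * (g/8*(eps*eps)*(1+R))) by (apply Rmult_le_pos; lra).
      assert (sqrt (sqrt (1 + K*K)) * (eps*eps) <= (1+R) * (eps*eps)) by (apply Rmult_le_compat_r; lra).
      nra.
    + assert (Hr1 : rho <= eps * (1 + R)).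
      { apply sq_le_norm. nra. rewrite Hrho. assert (R <= (1+R)*(1+R)) by nra. nra. }
      assert (Hr3 : rho*rho*rho <= eps*eps*eps*((1+R)*(1+R))).
      { assert (rho*rho <= eps*eps*(1+R)) by nra.
        replace (rho*rho*rho) with (rho * (rho*rho)) by ring.
        replace (eps*eps*eps*((1+R)*(1+R))) with ((eps*(1+R)) * (eps*eps*(1+R))) by ring.
        apply Rmult_le_compat; nra. }
      assert (C2 * eps * (g * (g/8*(eps*eps)*(1+R)) * ((1+R)/2)) = 8 * (eps*eps*eps*((1+R)*(1+R)))) by (unfold C2; field; lra).
      assert (0 <= eps * (g * (g/8*(eps*eps)*(1+R)) * Cnorm w)) by (repeat apply Rmult_le_pos; lra).
      assert (C2 * eps * (g * (g/8*(eps*eps)*(1+R)) * ((1+R)/2)) <= C2 * eps * (g * (g/8*(eps*eps)*(1+R)) * Cnorm w)).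
      { apply Rmult_le_compat_l; [nra|]. apply Rmult_le_compat_l; [|lra]. apply Rmult_le_pos; lra. }
      assert (0 <= (C1 + C3 + C4) * (eps * (g * (g/8*(eps*eps)*(1+R)) * Cnorm w))) by (apply Rmult_le_pos; lra).
      nra.
  - assert (Hlg' : gamma_beta beta / 28 <= Cnorm (mkC (eps*K) (eps*q))) by (fold g; unfold d in Hlg; fold k rho; lra).
    destruct (large_regime beta kap b0 eps K q hb Hkap Hb0 HLR ltac:(lra) He' Heb Hed Hlg') as [L1 L2].
    cbv zeta in L1, L2. fold g d k F c D E rho M sM k2 in L1, L2.
    set (s := sqrt (1 + Rabs (eps*K))) in *.
    assert (Hs1 : 1 <= s) by (unfold s; apply Rle_trans with (sqrt 1); [rewrite sqrt_1; lra | apply sqrt_le_1_alt; pose proof (Rabs_pos (eps*K)); lra]).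
    assert (HL0 : 0 < k2*(eps*q)*s) by (apply Rmult_lt_0_compat; [apply Rmult_lt_0_compat|]; nra).
    apply (Hmain (k2*(eps*q)*s) HL0 L1).
    + pose proof (ssqrt_large K eps He') as Hsq. fold s in Hsq.
      assert (C3 * (k2*(eps*q)*s) = eps * s) by (unfold C3; field; lra).
      assert (0 <= (C1 + C2 + C4) * (k2*(eps*q)*s)) by (apply Rmult_le_pos; lra).
      assert (sqrt (sqrt (1 + K*K)) * eps * eps <= s * eps) by (apply Rmult_le_compat_r; lra).
      lra.
    + assert (Hd2 : d*d <= eps*eps*(1+R)) by nra.
      assert (C4 * eps * (g * (k2*(eps*q)*s) * ((1+R)/2)) = ((sM+1)/(d*d) + g) * s * (eps*eps*(1+R))) by (unfold C4; field; repeat split; lra).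
      assert (((sM+1)/(d*d)) * s * (eps*eps*(1+R)) >= (sM+1) * s).
      { apply Rle_ge. replace ((sM+1)*s) with (((sM+1)/(d*d)) * s * (d*d)) by (field; lra).
        apply Rmult_le_compat_l; [|lra]. apply Rmult_le_pos; [|lra]. unfold Rdiv; apply Rmult_le_pos; [lra| left; apply Rinv_0_lt_compat; nra]. }
      assert (g * s * (eps*eps*(1+R)) >= g * (rho*rho)).
      { rewrite Hrho. apply Rle_ge. assert (1*(eps*eps*(1+R)) <= s*(eps*eps*(1+R))) by (apply Rmult_le_compat_r; nra).
        assert (eps*eps*R <= s*(eps*eps*(1+R))) by nra.
        replace (g * s * (eps*eps*(1+R))) with (g * (s * (eps*eps*(1+R)))) by ring.
        apply Rmult_le_compat_l; lra. }
      assert (0 <= eps * (g * (k2*(eps*q)*s) * Cnorm w)) by (apply Rmult_le_pos; [lra|]; apply Rmult_le_pos; [apply Rmult_le_pos; lra | apply Cnorm_ge0]).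
      assert (C4 * eps * (g * (k2*(eps*q)*s) * ((1+R)/2)) <= C4 * eps * (g * (k2*(eps*q)*s) * Cnorm w)).
      { apply Rmult_le_compat_l; [nra|]. apply Rmult_le_compat_l; [|lra]. apply Rmult_le_pos; lra. }
      assert (0 <= (C1 + C2 + C3) * (eps * (g * (k2*(eps*q)*s) * Cnorm w))) by (apply Rmult_le_pos; lra).
      nra.
Qed.
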